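(* Let $f \in \mathcal{C}_{2\pi}$, let $A_n[f]$ be the Toeplitz matrix generated by $f$ and $c_n[f]$ the optimal circulant preconditioner for $A_n[f]$. Assume that $\sin c_n[f]$ is invertible for every $n$ and that there is a constant $C$ with $\|(\sin c_n[f])^{-1}\|_2\le C$ for all $n$. Then for every $\epsilon>0$ there exist positive integers $N$ and $M$ such that for every $n>N$ there are matrices $\overline{\mathcal R}_n[f],\overline{\mathcal E}_n[f]\in\mathbb{C}^{n\times n}$ with \[ \big[(\sin c_n[f])^{-1}\sin A_n[f]\big]^{*}\big[(\sin c_n[f])^{-1}\sin A_n[f]\big] = I_n+\overline{\mathcal R}_n[f]+\overline{\mathcal E}_n[f],\quad \operatorname{rank}\overline{\mathcal R}_n[f]\le 4M,\quad \|\overline{\mathcal E}_n[f]\|_2\le\epsilon. \]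
   Context: $\mathcal{C}_{2\pi}$ denotes the Banach space of all $2\pi$-periodic continuous complex-valued functions on $\mathbb{R}$ with the supremum norm $\|\cdot\|_\infty$. For $f\in\mathcal{C}_{2\pi}$ its Fourier coefficients are $a_k=\frac{1}{2\pi}\int_{-\pi}^{\pi} f(\theta)e^{-\mathbf{i}k\theta}\,d\theta$, $k\in\mathbb{Z}$. The Toeplitz matrix generated by $f$ is the $n\times n$ matrix $A_n[f]$ whose $(j,k)$ entry is $a_{j-k}$. The optimal circulant preconditioner $c_n[f]$ is the $n\times n$ circulant matrix whose $(j,k)$ entry is $c_{(j-k)\bmod n}$, where $c_k=\frac{(n-k)a_k+k\,a_{k-n}}{n}$ for $0\le k<n$. For a square matrix $X$, $\sin X=\sum_{m\ge0}\frac{(-1)^m}{(2m+1)!}X^{2m+1}$; $X^*$ is the conjugate transpose. $I_n$ is the $n\times n$ identity and $\|\cdot\|_2$ is the spectral norm. *)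

(* Defs.v *)
(* classical reals, complex numbers as pairs of reals,
   n x n complex matrices as functions nat -> nat -> Cx (only indices < n matter). *)
From Stdlib Require Import Reals Lra ZArith List.
Open Scope R_scope.

Definition Cx : Type := (R * R)%type.
Definition Cre (z : Cx) : R := fst z.
Definition Cim (z : Cx) : R := snd z.
Definition RtoC (x : R) : Cx := (x, 0).
Definition C0 : Cx := (0, 0).
Definition C1 : Cx := (1, 0).
Definition Cadd (z w : Cx) : Cx := (fst z + fst w, snd z + snd w).
Definition Cmul (z w : Cx) : Cx :=
  (fst z * fst w - snd z * snd w, fst z * snd w + snd z * fst w).
Definition Cscale (r : R) (z : Cx) : Cx := (r * fst z, r * snd z).
Definition Cconj (z : Cx) : Cx := (fst z, - snd z).
Definition Cnorm2 (z : Cx) : R := fst z * fst z + snd z * snd z.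

Fixpoint Csum (n : nat) (F : nat -> Cx) : Cx :=
  match n with
  | O => C0
  | S m => Cadd (Csum m F) (F m)
  end.

Fixpoint Rsum (n : nat) (F : nat -> R) : R :=
  match n with
  | O => 0
  | S m => Rsum m F + F m
  end.

Definition in_C2pi (f : R -> Cx) : Prop :=
  continuity (fun t => Cre (f t)) /\ continuity (fun t => Cim (f t)) /\
  forall t, f (t + 2 * PI) = f t.

Definition cexp_neg (k : Z) (t : R) : Cx := (cos (IZR k * t), - sin (IZR k * t)).

Definition is_fourier_coeff (f : R -> Cx) (k : Z) (a : Cx) : Prop :=
  (exists pr : Riemann_integrable (fun t => Cre (Cmul (f t) (cexp_neg k t))) (- PI) PI,
      RiemannInt pr = 2 * PI * Cre a) /\
  (exists pr : Riemann_integrable (fun t => Cim (Cmul (f t) (cexp_neg k t))) (- PI) PI,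
      RiemannInt pr = 2 * PI * Cim a).

Definition Mat : Type := nat -> nat -> Cx.
Definition Vec : Type := nat -> Cx.

Definition mmul (n : nat) (A B : Mat) : Mat :=
  fun i j => Csum n (fun l => Cmul (A i l) (B l j)).
Definition mid : Mat := fun i j => if Nat.eqb i j then C1 else C0.
Fixpoint mpow (n : nat) (X : Mat) (k : nat) : Mat :=
  match k with
  | O => mid
  | S k' => mmul n X (mpow n X k')
  end.
Definition madj (X : Mat) : Mat := fun i j => Cconj (X j i).

Definition meq (n : nat) (A B : Mat) : Prop :=
  forall i j, (i < n)%nat -> (j < n)%nat -> A i j = B i j.

Definition toeplitz (a : Z -> Cx) : Mat :=
  fun j k => a (Z.of_nat j - Z.of_nat k)%Z.

Definition circ_coeff (n : nat) (a : Z -> Cx) (k : nat) : Cx :=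
  Cscale (/ INR n)
    (Cadd (Cscale (INR n - INR k) (a (Z.of_nat k)))
          (Cscale (INR k) (a (Z.of_nat k - Z.of_nat n)%Z))).
Definition opt_circulant (n : nat) (a : Z -> Cx) : Mat :=
  fun j k => circ_coeff n a (Z.to_nat ((Z.of_nat j - Z.of_nat k) mod Z.of_nat n)).

Definition sin_partial (n : nat) (X : Mat) (N : nat) : Mat :=
  fun i j => Csum (S N) (fun m =>
     Cscale ((-1) ^ m / INR (fact (2 * m + 1))) (mpow n X (2 * m + 1) i j)).
Definition is_msin (n : nat) (X Sx : Mat) : Prop :=
  forall i j, (i < n)%nat -> (j < n)%nat ->
    Un_cv (fun N => Cre (sin_partial n X N i j)) (Cre (Sx i j)) /\
    Un_cv (fun N => Cim (sin_partial n X N i j)) (Cim (Sx i j)).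

Definition is_inverse (n : nat) (X Y : Mat) : Prop :=
  meq n (mmul n X Y) mid /\ meq n (mmul n Y X) mid.

Definition vnorm (n : nat) (v : Vec) : R := sqrt (Rsum n (fun i => Cnorm2 (v i))).
Definition mvmul (n : nat) (X : Mat) (v : Vec) : Vec :=
  fun i => Csum n (fun l => Cmul (X i l) (v l)).
Definition opnorm_le (n : nat) (X : Mat) (c : R) : Prop :=
  forall v : Vec, vnorm n (mvmul n X v) <= c * vnorm n v.

Definition rank_le (n : nat) (X : Mat) (r : nat) : Prop :=
  exists u : nat -> Vec, forall k, (k < n)%nat ->
    exists coef : nat -> Cx, forall i, (i < n)%nat ->
      X i k = Csum r (fun l => Cmul (coef l) (u l i)).

Definition madd (A B : Mat) : Mat := fun i j => Cadd (A i j) (B i j).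

(* Main.v *)
From Pilot Require Import Defs.
From Stdlib Require Import Reals ZArith.
Open Scope R_scope.
From Coquelicot Require Import Coquelicot.
From Stdlib Require Import Reals Lra Lia ZArith Arith FunctionalExtensionality Factorial.
Import Pilot.Defs.
Open Scope R_scope.

Ltac Cring := unfold Cadd, Cmul, Cscale, Cconj, C0, C1, RtoC, Cre, Cim in *;
  apply injective_projections; simpl; ring.

Lemma Csum_ext n F G : (forall l, (l < n)%nat -> F l = G l) -> Csum n F = Csum n G.
Proof. induction n; intros H; simpl; auto. rewrite IHn by (intros; apply H; lia). rewrite H by lia; auto. Qed.

Lemma Rsum_ext n F G : (forall l, (l < n)%nat -> F l = G l) -> Rsum n F = Rsum n G.
Proof. induction n; intros H; simpl; auto. rewrite IHn by (intros; apply H; lia). rewrite H by lia; auto. Qed.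

Lemma fst_Csum n F : fst (Csum n F) = Rsum n (fun l => fst (F l)).
Proof. induction n; simpl; auto. rewrite IHn; auto. Qed.
Lemma snd_Csum n F : snd (Csum n F) = Rsum n (fun l => snd (F l)).
Proof. induction n; simpl; auto. rewrite IHn; auto. Qed.

Lemma Csum_add n F G : Csum n (fun l => Cadd (F l) (G l)) = Cadd (Csum n F) (Csum n G).
Proof. induction n; simpl. Cring. rewrite IHn. Cring. Qed.
Lemma Csum_mul_l n c F : Csum n (fun l => Cmul c (F l)) = Cmul c (Csum n F).
Proof. induction n; simpl. Cring. rewrite IHn. Cring. Qed.
Lemma Csum_mul_r n c F : Csum n (fun l => Cmul (F l) c) = Cmul (Csum n F) c.
Proof. induction n; simpl. Cring. rewrite IHn. Cring. Qed.
Lemma Csum_scale n r F : Csum n (fun l => Cscale r (F l)) = Cscale r (Csum n F).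
Proof. induction n; simpl. Cring. rewrite IHn. Cring. Qed.
Lemma Csum_zero n : Csum n (fun _ => C0) = C0.
Proof. induction n; simpl; auto. rewrite IHn. Cring. Qed.
Lemma Csum_swap n m F : Csum n (fun i => Csum m (fun j => F i j)) = Csum m (fun j => Csum n (fun i => F i j)).
Proof. induction n; simpl. symmetry; apply Csum_zero. rewrite IHn, <- Csum_add. auto. Qed.
Lemma Csum_conj n F : Cconj (Csum n F) = Csum n (fun l => Cconj (F l)).
Proof. induction n; simpl. Cring. rewrite <- IHn. Cring. Qed.

Lemma Rsum_add n F G : Rsum n (fun l => F l + G l) = Rsum n F + Rsum n G.
Proof. induction n; simpl. ring. rewrite IHn. ring. Qed.
Lemma Rsum_scal n c F : Rsum n (fun l => c * F l) = c * Rsum n F.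
Proof. induction n; simpl. ring. rewrite IHn. ring. Qed.
Lemma Rsum_zero n : Rsum n (fun _ => 0) = 0.
Proof. induction n; simpl; auto. rewrite IHn; ring. Qed.
Lemma Rsum_le n F G : (forall l, (l < n)%nat -> F l <= G l) -> Rsum n F <= Rsum n G.
Proof. induction n; intros H; simpl. lra. assert (F n <= G n) by (apply H; lia).
  assert (Rsum n F <= Rsum n G) by (apply IHn; intros; apply H; lia). lra. Qed.
Lemma Rsum_nonneg n F : (forall l, (l < n)%nat -> 0 <= F l) -> 0 <= Rsum n F.
Proof. intros H. rewrite <- (Rsum_zero n). apply Rsum_le; auto. Qed.
Lemma Rsum_swap n m F : Rsum n (fun i => Rsum m (fun j => F i j)) = Rsum m (fun j => Rsum n (fun i => F i j)).
Proof. induction n; simpl. symmetry; apply Rsum_zero. rewrite IHn, <- Rsum_add. auto. Qed.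
Lemma Rsum_opp n F : Rsum n (fun l => - F l) = - Rsum n F.
Proof. induction n; simpl. ring. rewrite IHn. ring. Qed.


Lemma Csum_first n F : Csum (S n) F = Cadd (F O) (Csum n (fun l => F (S l))).
Proof. induction n. simpl. Cring. change (Csum (S (S n)) F) with (Cadd (Csum (S n) F) (F (S n))).
  rewrite IHn. simpl. Cring. Qed.
Lemma Rsum_first n F : Rsum (S n) F = F O + Rsum n (fun l => F (S l)).
Proof. induction n. simpl. ring. change (Rsum (S (S n)) F) with (Rsum (S n) F + F (S n)).
  rewrite IHn. simpl. ring. Qed.
Lemma Csum_split a b F : Csum (a + b) F = Cadd (Csum a F) (Csum b (fun l => F (a + l)%nat)).
Proof. induction b. simpl. rewrite Nat.add_0_r. Cring. rewrite Nat.add_succ_r. simpl. rewrite IHb. Cring. Qed.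
Lemma Rsum_split a b F : Rsum (a + b) F = Rsum a F + Rsum b (fun l => F (a + l)%nat).
Proof. induction b. simpl. rewrite Nat.add_0_r. ring. rewrite Nat.add_succ_r. simpl. rewrite IHb. ring. Qed.

Lemma Rdiv_le_0_compat_loc a b : 0 <= a -> 0 < b -> 0 <= a / b.
Proof. intros; unfold Rdiv; apply Rmult_le_pos; [lra| left; apply Rinv_0_lt_compat; lra]. Qed.
Lemma Csum_delta n i x : (i < n)%nat -> Csum n (fun l => if Nat.eqb l i then x else C0) = x.
Proof. induction n; intros H. lia. simpl. destruct (Nat.eqb n i) eqn:E.
  apply Nat.eqb_eq in E; subst. rewrite Csum_ext with (G := fun _ => C0). rewrite Csum_zero. Cring.
  intros l Hl. destruct (Nat.eqb l i) eqn:E2; auto. apply Nat.eqb_eq in E2; lia.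
  apply Nat.eqb_neq in E. rewrite IHn by lia. Cring. Qed.

Lemma lam_principle X Y S : 0 <= X -> 0 <= Y ->
  (forall lam, 0 < lam -> S <= (lam * X + Y / lam) / 2) -> S <= sqrt X * sqrt Y.
Proof.
  intros HX HY H. assert (ha := sqrt_pos X). assert (hb := sqrt_pos Y).
  assert (ea := sqrt_sqrt X HX). assert (eb := sqrt_sqrt Y HY).
  revert ha hb ea eb. generalize (sqrt X) (sqrt Y). intros a b ha hb ea eb.
  subst X Y.
  destruct (Rle_lt_or_eq_dec 0 a ha) as [pa|za]; destruct (Rle_lt_or_eq_dec 0 b hb) as [pb|zb].
  - specialize (H (b / a) ltac:(apply Rdiv_lt_0_compat; auto)).
    replace ((b / a * (a * a) + b * b / (b / a)) / 2) with (a * b) in H by (field; lra). lra.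
  - subst b. destruct (Rle_or_lt S 0). lra.
    specialize (H (S / (a * a + 1)) ltac:(apply Rdiv_lt_0_compat; nra)).
    assert (S / (a * a + 1) * (a * a) < S). { apply Rmult_lt_reg_r with (a * a+1). nra. field_simplify; nra. }
    replace (0 * 0 / (S / (a * a + 1))) with 0 in H by (field; split; nra). lra.
  - subst a. destruct (Rle_or_lt S 0). lra.
    specialize (H (b * b / S + 1) ltac:(apply Rplus_le_lt_0_compat; [apply Rdiv_le_0_compat_loc; nra|lra])).
    assert (e: b*b/(b*b/S+1) = S * (b*b/(b*b+S))) by (field; split; nra).
    assert (b*b/(b*b+S) < 1). { apply (Rmult_lt_reg_r (b*b+S)). nra. rewrite Rmult_1_l; unfold Rdiv; rewrite Rmult_assoc, Rinv_l; nra. }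
    assert (0 <= b*b/(b*b+S)) by (apply Rdiv_le_0_compat_loc; nra).
    replace ((b * b / S + 1) * (0 * 0)) with 0 in H by ring. rewrite e in H. nra.
  - subst. destruct (Rle_or_lt S 0). lra.
    specialize (H 1 ltac:(lra)). lra.
Qed.

Lemma amgm a b lam : 0 < lam -> a * b <= (lam * (a * a) + (b * b) / lam) / 2.
Proof. intros Hl. assert (0 <= (lam * a - b) * (lam * a - b)) by apply Rle_0_sqr.
  replace ((lam * (a * a) + (b * b) / lam) / 2) with (a*b + (lam*a-b)*(lam*a-b)/(2*lam)) by (field; lra).
  assert (0 <= (lam*a-b)*(lam*a-b)/(2*lam)) by (apply Rdiv_le_0_compat_loc; lra). lra. Qed.

Definition Cmd (z : Cx) : R := sqrt (Cnorm2 z).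
Lemma Cnorm2_nonneg z : 0 <= Cnorm2 z.
Proof. unfold Cnorm2. nra. Qed.
Lemma Cmd_nonneg z : 0 <= Cmd z.
Proof. apply sqrt_pos. Qed.
Lemma Cmd_sq z : Cmd z * Cmd z = Cnorm2 z.
Proof. apply sqrt_sqrt, Cnorm2_nonneg. Qed.
Lemma Cmd_mul z w : Cmd (Cmul z w) = Cmd z * Cmd w.
Proof. unfold Cmd. rewrite <- sqrt_mult by apply Cnorm2_nonneg. f_equal. unfold Cnorm2, Cmul. simpl. ring. Qed.
Lemma Cmd_conj z : Cmd (Cconj z) = Cmd z.
Proof. unfold Cmd, Cnorm2, Cconj. simpl. f_equal. ring. Qed.
Lemma Cre_le_Cmd z : fst z <= Cmd z.
Proof. unfold Cmd, Cnorm2. destruct (Rle_or_lt (fst z) 0). assert (0 <= sqrt (fst z * fst z + snd z * snd z)) by apply sqrt_pos. lra.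
  rewrite <- (sqrt_square (fst z)) at 1 by lra. apply sqrt_le_1_alt. nra. Qed.
Lemma Cim_le_Cmd z : Rabs (snd z) <= Cmd z.
Proof. unfold Cmd, Cnorm2. rewrite <- sqrt_Rsqr_abs. apply sqrt_le_1_alt. unfold Rsqr. nra. Qed.
Lemma Cre_abs_le_Cmd z : Rabs (fst z) <= Cmd z.
Proof. unfold Cmd, Cnorm2. rewrite <- sqrt_Rsqr_abs. apply sqrt_le_1_alt. unfold Rsqr. nra. Qed.
Lemma Cmd_add z w : Cmd (Cadd z w) <= Cmd z + Cmd w.
Proof. unfold Cmd.
  assert (e1 := sqrt_sqrt _ (Cnorm2_nonneg z)). assert (e2 := sqrt_sqrt _ (Cnorm2_nonneg w)).
  assert (e3 := sqrt_sqrt _ (Cnorm2_nonneg (Cadd z w))).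
  assert (h1:=sqrt_pos (Cnorm2 z)); assert (h2:=sqrt_pos (Cnorm2 w)); assert (h3:=sqrt_pos (Cnorm2 (Cadd z w))).
  assert (fst z * fst w + snd z * snd w <= sqrt (Cnorm2 z) * sqrt (Cnorm2 w)).
  { unfold Cnorm2. pose proof (sqrt_cauchy (fst z) (snd z) (fst w) (snd w)). unfold Rsqr in H. exact H. }
  assert (Cnorm2 (Cadd z w) = Cnorm2 z + Cnorm2 w + 2 * (fst z * fst w + snd z * snd w)) by (unfold Cnorm2, Cadd; simpl; ring).
  nra. Qed.


Definition ip (n : nat) (w v : Vec) : Cx := Csum n (fun i => Cmul (Cconj (w i)) (v i)).
Definition nsq (n : nat) (v : Vec) : R := Rsum n (fun i => Cnorm2 (v i)).

Lemma nsq_nonneg n v : 0 <= nsq n v.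
Proof. apply Rsum_nonneg; intros; apply Cnorm2_nonneg. Qed.
Lemma fst_ip_self n v : fst (ip n v v) = nsq n v.
Proof. unfold ip, nsq. rewrite fst_Csum. apply Rsum_ext; intros. unfold Cmul, Cconj, Cnorm2; simpl; ring. Qed.
Lemma nsq_ext n u u' : (forall i, (i < n)%nat -> u i = u' i) -> nsq n u = nsq n u'.
Proof. intros H; unfold nsq; apply Rsum_ext; intros; rewrite H; auto. Qed.
Lemma vnorm_ext n u u' : (forall i, (i < n)%nat -> u i = u' i) -> vnorm n u = vnorm n u'.
Proof. intros H; unfold vnorm; f_equal; apply nsq_ext; auto. Qed.
Lemma vnorm_sq n v : vnorm n v * vnorm n v = nsq n v.
Proof. apply sqrt_sqrt, nsq_nonneg. Qed.
Lemma vnorm_nonneg n v : 0 <= vnorm n v.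
Proof. apply sqrt_pos. Qed.

Lemma ip_lam n w v lam : 0 < lam -> fst (ip n w v) <= (lam * nsq n w + nsq n v / lam) / 2.
Proof. intros Hl. unfold ip, nsq. rewrite fst_Csum.
  replace ((lam * Rsum n (fun i => Cnorm2 (w i)) + Rsum n (fun i => Cnorm2 (v i)) / lam) / 2)
   with (Rsum n (fun i => (lam * Cnorm2 (w i) + Cnorm2 (v i) / lam) / 2)).
  apply Rsum_le; intros l _. unfold Cmul, Cconj, Cnorm2; simpl.
  pose proof (amgm (fst (w l)) (fst (v l)) lam Hl). pose proof (amgm (snd (w l)) (snd (v l)) lam Hl).
  replace ((lam * (fst (w l) * fst (w l) + snd (w l) * snd (w l)) + (fst (v l) * fst (v l) + snd (v l) * snd (v l)) / lam) / 2)
    with ((lam * (fst (w l) * fst (w l)) + fst (v l) * fst (v l) / lam) / 2 + (lam * (snd (w l) * snd (w l)) + snd (v l) * snd (v l) / lam) / 2) by (field; lra).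
  lra.
  rewrite (Rsum_ext n _ (fun i => lam/2 * Cnorm2 (w i) + /(2*lam) * Cnorm2 (v i))) by (intros; field; lra).
  rewrite Rsum_add, !Rsum_scal. field; lra.
Qed.

Lemma CS n w v : fst (ip n w v) <= vnorm n w * vnorm n v.
Proof. apply lam_principle; try apply nsq_nonneg. intros; apply ip_lam; auto. Qed.

Lemma ip_add_r n w u u' : ip n w (fun i => Cadd (u i) (u' i)) = Cadd (ip n w u) (ip n w u').
Proof. unfold ip. rewrite <- Csum_add. apply Csum_ext; intros; Cring. Qed.
Lemma ip_add_l n w w' u : ip n (fun i => Cadd (w i) (w' i)) u = Cadd (ip n w u) (ip n w' u).
Proof. unfold ip. rewrite <- Csum_add. apply Csum_ext; intros; Cring. Qed.
Lemma ip_conj n w v : fst (ip n w v) = fst (ip n v w).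
Proof. unfold ip. rewrite !fst_Csum. apply Rsum_ext; intros; unfold Cmul, Cconj; simpl; ring. Qed.

Lemma vnorm_add n u u' : vnorm n (fun i => Cadd (u i) (u' i)) <= vnorm n u + vnorm n u'.
Proof.
  assert (e1 := vnorm_sq n u). assert (e2 := vnorm_sq n u'). assert (e3 := vnorm_sq n (fun i => Cadd (u i) (u' i))).
  assert (h1 := vnorm_nonneg n u). assert (h2 := vnorm_nonneg n u'). assert (h3 := vnorm_nonneg n (fun i => Cadd (u i) (u' i))).
  assert (hc := CS n u u').
  assert (nsq n (fun i => Cadd (u i) (u' i)) = nsq n u + nsq n u' + 2 * fst (ip n u u')).
  { rewrite <- !fst_ip_self. rewrite ip_add_l, !ip_add_r. unfold Cadd at 1 2 3; simpl. rewrite (ip_conj n u' u). ring. }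
  nra. Qed.

Lemma vnorm_scale n z u : vnorm n (fun i => Cmul z (u i)) = Cmd z * vnorm n u.
Proof. unfold vnorm, Cmd. rewrite <- sqrt_mult by (apply Cnorm2_nonneg || apply nsq_nonneg). f_equal.
  unfold nsq. rewrite <- Rsum_scal. apply Rsum_ext; intros; unfold Cnorm2, Cmul; simpl; ring. Qed.

Definition mscale (z : Cx) (X : Mat) : Mat := fun i j => Cmul z (X i j).
Definition msub (X Y : Mat) : Mat := madd X (mscale (RtoC (-1)) Y).
Definition mzero : Mat := fun _ _ => C0.

Definition bil_lam (n : nat) (X : Mat) (c : R) : Prop :=
  forall v w lam, 0 < lam -> fst (ip n w (mvmul n X v)) <= c / 2 * (lam * nsq n w + nsq n v / lam).

Lemma bil_opnorm n X c : 0 <= c -> bil_lam n X c -> opnorm_le n X c.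
Proof. intros Hc H v. set (u := mvmul n X v).
  assert (S: nsq n u <= sqrt (c * nsq n u) * sqrt (c * nsq n v)).
  { apply lam_principle; try (apply Rmult_le_pos; auto; apply nsq_nonneg). intros lam Hl.
    specialize (H v u lam Hl). rewrite fst_ip_self in H. fold u in H.
    replace ((lam * (c * nsq n u) + c * nsq n v / lam) / 2) with (c / 2 * (lam * nsq n u + nsq n v / lam)) by (field; lra). auto. }
  rewrite !sqrt_mult in S by (auto; apply nsq_nonneg).
  assert (ec := sqrt_sqrt c Hc). assert (hc := sqrt_pos c).
  assert (e1 := vnorm_sq n u). assert (e2 := vnorm_sq n v). assert (h1 := vnorm_nonneg n u). assert (h2 := vnorm_nonneg n v).
  change (vnorm n u) with (sqrt (nsq n u)) in *; change (vnorm n v) with (sqrt (nsq n v)) in *.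
  assert (E: sqrt c * sqrt (nsq n u) * (sqrt c * sqrt (nsq n v)) = c * sqrt (nsq n u) * sqrt (nsq n v)) by (transitivity ((sqrt c * sqrt c) * sqrt (nsq n u) * sqrt (nsq n v)); [ring | rewrite ec; ring]).
  rewrite E in S. rewrite <- e1 in S at 1.
  assert (sqrt (nsq n u) * sqrt (nsq n u) <= c * sqrt (nsq n u) * sqrt (nsq n v)) by exact S.
  destruct (Rle_lt_or_eq_dec 0 _ h1). apply Rmult_le_reg_l with (sqrt (nsq n u)); auto. replace (sqrt (nsq n u) * (c * sqrt (nsq n v))) with (c * sqrt (nsq n u) * sqrt (nsq n v)) by ring. exact H0.
  rewrite <- e. nra. Qed.

Lemma opnorm_bil n X c : 0 <= c -> opnorm_le n X c -> bil_lam n X c.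
Proof. intros Hc H v w lam Hl. eapply Rle_trans. apply CS.
  assert (h := H v). assert (h1 := vnorm_nonneg n w).
  eapply Rle_trans. apply Rmult_le_compat_l. apply h1. apply h.
  pose proof (amgm (vnorm n w) (vnorm n v) lam Hl). rewrite !vnorm_sq in H0.
  replace (vnorm n w * (c * vnorm n v)) with (c * (vnorm n w * vnorm n v)) by ring.
  replace (c / 2 * (lam * nsq n w + nsq n v / lam)) with (c * ((lam * nsq n w + nsq n v / lam) / 2)) by (field; lra).
  apply Rmult_le_compat_l; auto. Qed.

Lemma mvmul_madd n A B v i : mvmul n (madd A B) v i = Cadd (mvmul n A v i) (mvmul n B v i).
Proof. unfold mvmul, madd. rewrite <- Csum_add. apply Csum_ext; intros; Cring. Qed.
Lemma mvmul_mscale n z A v i : mvmul n (mscale z A) v i = Cmul z (mvmul n A v i).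
Proof. unfold mvmul, mscale. rewrite <- Csum_mul_l. apply Csum_ext; intros; Cring. Qed.
Lemma mvmul_mmul n A B v i : mvmul n (mmul n A B) v i = mvmul n A (mvmul n B v) i.
Proof. unfold mvmul, mmul. 
  transitivity (Csum n (fun l => Csum n (fun k => Cmul (A i k) (Cmul (B k l) (v l))))).
  apply Csum_ext; intros. rewrite <- Csum_mul_r. apply Csum_ext; intros; Cring.
  rewrite Csum_swap. apply Csum_ext; intros. rewrite <- Csum_mul_l. auto. Qed.

Lemma opnorm_ext n X Y c : meq n X Y -> opnorm_le n X c -> opnorm_le n Y c.
Proof. intros E H v. rewrite (vnorm_ext n (mvmul n Y v) (mvmul n X v)). apply H.
  intros i Hi. unfold mvmul. apply Csum_ext; intros. rewrite E; auto. Qed.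
Lemma opnorm_add n A B a b : opnorm_le n A a -> opnorm_le n B b -> opnorm_le n (madd A B) (a + b).
Proof. intros HA HB v. rewrite (vnorm_ext n _ (fun i => Cadd (mvmul n A v i) (mvmul n B v i))).
  eapply Rle_trans. apply vnorm_add. specialize (HA v); specialize (HB v). lra.
  intros; apply mvmul_madd. Qed.
Lemma opnorm_scale n z A a : opnorm_le n A a -> opnorm_le n (mscale z A) (Cmd z * a).
Proof. intros HA v. rewrite (vnorm_ext n _ (fun i => Cmul z (mvmul n A v i))).
  rewrite vnorm_scale. rewrite Rmult_assoc. apply Rmult_le_compat_l. apply Cmd_nonneg. apply HA.
  intros; apply mvmul_mscale. Qed.
Lemma opnorm_mul n A B a b : 0 <= a -> opnorm_le n A a -> opnorm_le n B b -> opnorm_le n (mmul n A B) (a * b).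
Proof. intros Ha HA HB v. rewrite (vnorm_ext n _ (mvmul n A (mvmul n B v))).
  eapply Rle_trans. apply HA. rewrite Rmult_assoc. apply Rmult_le_compat_l; auto.
  intros; apply mvmul_mmul. Qed.
Lemma opnorm_mono n A a b : a <= b -> opnorm_le n A a -> opnorm_le n A b.
Proof. intros Hab HA v. eapply Rle_trans. apply HA. apply Rmult_le_compat_r. apply vnorm_nonneg. auto. Qed.
Lemma opnorm_abs n A a : opnorm_le n A a -> opnorm_le n A (Rabs a).
Proof. intros; eapply opnorm_mono; eauto. apply Rle_abs. Qed.
Lemma opnorm_zero n : opnorm_le n mzero 0.
Proof. intros v. assert (E: vnorm n (mvmul n mzero v) = 0).
  { unfold vnorm. rewrite <- sqrt_0. f_equal. rewrite <- (Rsum_zero n). apply Rsum_ext. intros l Hl.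
    unfold mvmul, mzero. rewrite (Csum_ext n _ (fun _ => C0)). rewrite Csum_zero. unfold Cnorm2, C0; simpl; ring.
    intros; Cring. }
  rewrite E. assert (h := vnorm_nonneg n v). lra. Qed.
Lemma mvmul_mid n v i : (i < n)%nat -> mvmul n mid v i = v i.
Proof. intros Hi. unfold mvmul, mid. rewrite <- (Csum_delta n i (v i) Hi). apply Csum_ext; intros l _.
  rewrite Nat.eqb_sym. destruct (Nat.eqb l i) eqn:E. apply Nat.eqb_eq in E; subst. Cring. Cring. Qed.
Lemma opnorm_id n : opnorm_le n mid 1.
Proof. intros v. rewrite (vnorm_ext n _ v). lra. intros; apply mvmul_mid; auto. Qed.

Lemma ip_adj n X w v : ip n w (mvmul n (madj X) v) = ip n (mvmul n X w) v.
Proof. unfold ip, mvmul, madj.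
  transitivity (Csum n (fun i => Csum n (fun k => Cmul (Cmul (Cconj (w i)) (Cconj (X k i))) (v k)))).
  apply Csum_ext; intros. rewrite <- Csum_mul_l. apply Csum_ext; intros; Cring.
  rewrite Csum_swap. apply Csum_ext; intros. rewrite Csum_conj. rewrite <- Csum_mul_r. apply Csum_ext; intros; Cring. Qed.
Lemma opnorm_adj n X c : 0 <= c -> opnorm_le n X c -> opnorm_le n (madj X) c.
Proof. intros Hc H. apply bil_opnorm; auto. intros v w lam Hl. rewrite ip_adj, ip_conj.
  apply opnorm_bil in H; auto.
  replace (lam * nsq n w + nsq n v / lam) with ((/lam) * nsq n v + nsq n w / (/lam)) by (field; lra).
  apply H. apply Rinv_0_lt_compat; auto. Qed.

Definition lr (n r : nat) (X : Mat) : Prop :=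
  exists u w : nat -> Vec, meq n X (fun i j => Csum r (fun l => Cmul (u l i) (Cconj (w l j)))).

Lemma lr_rank n r X : lr n r X -> rank_le n X r.
Proof. intros [u [w H]]. exists u. intros k Hk. exists (fun l => Cconj (w l k)). intros i Hi.
  rewrite H by auto. apply Csum_ext; intros; Cring. Qed.
Lemma lr_ext n r X Y : meq n X Y -> lr n r X -> lr n r Y.
Proof. intros E [u [w H]]. exists u, w. intros i j Hi Hj. rewrite <- E by auto. auto. Qed.
Lemma lr_zero n : lr n 0 mzero.
Proof. exists (fun _ _ => C0), (fun _ _ => C0). intros i j _ _. reflexivity. Qed.
Lemma lr_add n r1 r2 A B : lr n r1 A -> lr n r2 B -> lr n (r1 + r2) (madd A B).
Proof. intros [u1 [w1 H1]] [u2 [w2 H2]].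
  exists (fun l => if Nat.ltb l r1 then u1 l else u2 (l - r1)%nat), (fun l => if Nat.ltb l r1 then w1 l else w2 (l - r1)%nat).
  intros i j Hi Hj. unfold madd. rewrite H1, H2 by auto. rewrite Csum_split. f_equal.
  apply Csum_ext; intros l Hl. destruct (Nat.ltb l r1) eqn:E; auto. apply Nat.ltb_ge in E; lia.
  apply Csum_ext; intros l Hl. destruct (Nat.ltb (r1 + l) r1) eqn:E. apply Nat.ltb_lt in E; lia.
  replace (r1 + l - r1)%nat with l by lia. auto. Qed.
Lemma lr_mul_l n r A B : lr n r B -> lr n r (mmul n A B).
Proof. intros [u [w H]]. exists (fun l => mvmul n A (u l)), w. intros i j Hi Hj. unfold mmul, mvmul.
  transitivity (Csum n (fun k => Csum r (fun l => Cmul (A i k) (Cmul (u l k) (Cconj (w l j)))))).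
  apply Csum_ext; intros. rewrite H by auto. rewrite Csum_mul_l. auto.
  rewrite Csum_swap. apply Csum_ext; intros. rewrite <- Csum_mul_r. apply Csum_ext; intros; Cring. Qed.
Lemma lr_mul_r n r A B : lr n r A -> lr n r (mmul n A B).
Proof. intros [u [w H]]. exists u, (fun l => mvmul n (madj B) (w l)). intros i j Hi Hj. unfold mmul, mvmul, madj.
  transitivity (Csum n (fun k => Csum r (fun l => Cmul (Cmul (u l i) (Cconj (w l k))) (B k j)))).
  apply Csum_ext; intros. rewrite H by auto. rewrite Csum_mul_r. auto.
  rewrite Csum_swap. apply Csum_ext; intros. rewrite Csum_conj. rewrite <- Csum_mul_l. apply Csum_ext; intros; Cring. Qed.
Lemma lr_adj n r A : lr n r A -> lr n r (madj A).
Proof. intros [u [w H]]. exists w, u. intros i j Hi Hj. unfold madj. rewrite H by auto. rewrite Csum_conj. apply Csum_ext; intros; Cring. Qed.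
Lemma lr_scale n r z A : lr n r A -> lr n r (mscale z A).
Proof. intros [u [w H]]. exists (fun l i => Cmul z (u l i)), w. intros i j Hi Hj. unfold mscale. rewrite H by auto.
  rewrite <- Csum_mul_l. apply Csum_ext; intros; Cring. Qed.
Lemma lr_mono n r r' A : (r <= r')%nat -> lr n r A -> lr n r' A.
Proof. intros Hr [u [w H]]. exists (fun l => if Nat.ltb l r then u l else fun _ => C0), w.
  intros i j Hi Hj. rewrite H by auto. replace r' with (r + (r' - r))%nat by lia. rewrite Csum_split.
  rewrite (Csum_ext (r' - r) _ (fun _ => C0)). rewrite Csum_zero. 
  transitivity (Cadd (Csum r (fun l => Cmul (u l i) (Cconj (w l j)))) C0). Cring. f_equal.
  apply Csum_ext; intros l Hl. destruct (Nat.ltb l r) eqn:E; auto. apply Nat.ltb_ge in E; lia.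
  intros l Hl. destruct (Nat.ltb (r + l) r) eqn:E. apply Nat.ltb_lt in E; lia. Cring. Qed.

Lemma mmul_assoc n A B C : mmul n (mmul n A B) C = mmul n A (mmul n B C).
Proof. extensionality i; extensionality j. unfold mmul.
  transitivity (Csum n (fun l => Csum n (fun k => Cmul (A i k) (Cmul (B k l) (C l j))))).
  apply Csum_ext; intros. rewrite <- Csum_mul_r. apply Csum_ext; intros; Cring.
  rewrite Csum_swap. apply Csum_ext; intros. rewrite <- Csum_mul_l. auto. Qed.
Lemma mmul_madd_l n A B C : mmul n (madd A B) C = madd (mmul n A C) (mmul n B C).
Proof. extensionality i; extensionality j. unfold mmul, madd. rewrite <- Csum_add. apply Csum_ext; intros; Cring. Qed.
Lemma mmul_madd_r n A B C : mmul n A (madd B C) = madd (mmul n A B) (mmul n A C).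
Proof. extensionality i; extensionality j. unfold mmul, madd. rewrite <- Csum_add. apply Csum_ext; intros; Cring. Qed.
Lemma mmul_mscale_l n z A B : mmul n (mscale z A) B = mscale z (mmul n A B).
Proof. extensionality i; extensionality j. unfold mmul, mscale. rewrite <- Csum_mul_l. apply Csum_ext; intros; Cring. Qed.
Lemma mmul_mscale_r n z A B : mmul n A (mscale z B) = mscale z (mmul n A B).
Proof. extensionality i; extensionality j. unfold mmul, mscale. rewrite <- Csum_mul_l. apply Csum_ext; intros; Cring. Qed.
Lemma madj_mmul n A B : madj (mmul n A B) = mmul n (madj B) (madj A).
Proof. extensionality i; extensionality j. unfold mmul, madj. rewrite Csum_conj. apply Csum_ext; intros; Cring. Qed.
Lemma madj_madd A B : madj (madd A B) = madd (madj A) (madj B).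
Proof. extensionality i; extensionality j. unfold madj, madd. Cring. Qed.
Lemma madj_madj A : madj (madj A) = A.
Proof. extensionality i; extensionality j. unfold madj. Cring. Qed.

Lemma meq_refl n A : meq n A A.
Proof. intros i j _ _; auto. Qed.
Lemma meq_sym n A B : meq n A B -> meq n B A.
Proof. intros H i j Hi Hj; symmetry; auto. Qed.
Lemma meq_trans n A B C : meq n A B -> meq n B C -> meq n A C.
Proof. intros H1 H2 i j Hi Hj; rewrite H1; auto. Qed.
Lemma meq_mmul n A A' B B' : meq n A A' -> meq n B B' -> meq n (mmul n A B) (mmul n A' B').
Proof. intros H1 H2 i j Hi Hj. unfold mmul. apply Csum_ext; intros. rewrite H1, H2; auto. Qed.
Lemma meq_madd n A A' B B' : meq n A A' -> meq n B B' -> meq n (madd A B) (madd A' B').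
Proof. intros H1 H2 i j Hi Hj. unfold madd. rewrite H1, H2; auto. Qed.
Lemma meq_mscale n z A A' : meq n A A' -> meq n (mscale z A) (mscale z A').
Proof. intros H1 i j Hi Hj. unfold mscale. rewrite H1; auto. Qed.
Lemma meq_madj n A A' : meq n A A' -> meq n (madj A) (madj A').
Proof. intros H1 i j Hi Hj. unfold madj. rewrite H1; auto. Qed.
Lemma mmul_mid_l n A : meq n (mmul n mid A) A.
Proof. intros i j Hi Hj. unfold mmul. rewrite <- (Csum_delta n i (A i j) Hi). apply Csum_ext; intros l _.
  unfold mid. rewrite Nat.eqb_sym. destruct (Nat.eqb l i) eqn:E. apply Nat.eqb_eq in E; subst. Cring. Cring. Qed.
Lemma mmul_mid_r n A : meq n (mmul n A mid) A.
Proof. intros i j Hi Hj. unfold mmul. rewrite <- (Csum_delta n j (A i j) Hj). apply Csum_ext; intros l _.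
  unfold mid. destruct (Nat.eqb l j) eqn:E. apply Nat.eqb_eq in E; subst. Cring. Cring. Qed.
Lemma madj_mid : madj mid = mid.
Proof. extensionality i; extensionality j. unfold madj, mid. rewrite Nat.eqb_sym. destruct (Nat.eqb i j); Cring. Qed.

Lemma opnorm_msub n A B a b : opnorm_le n A a -> opnorm_le n B b -> opnorm_le n (msub A B) (a + b).
Proof. intros HA HB. unfold msub. apply opnorm_add; auto.
  replace b with (Cmd (RtoC (-1)) * b). apply opnorm_scale; auto.
  unfold Cmd, RtoC, Cnorm2; simpl. replace (-1 * -1 + 0 * 0) with 1 by ring. rewrite sqrt_1; ring. Qed.
Lemma lr_msub n r1 r2 A B : lr n r1 A -> lr n r2 B -> lr n (r1 + r2) (msub A B).
Proof. intros; unfold msub; apply lr_add; auto; apply lr_scale; auto. Qed.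

Lemma opnorm_pow n Y K : 0 <= K -> opnorm_le n Y K -> forall k, opnorm_le n (mpow n Y k) (K ^ k).
Proof. intros HK HY k. induction k; simpl. apply opnorm_id. apply opnorm_mul; auto. Qed.

Lemma msub_mul_split n X Y P Q : msub (mmul n X P) (mmul n Y Q) = madd (mmul n X (msub P Q)) (mmul n (msub X Y) Q).
Proof. unfold msub. rewrite mmul_madd_r, mmul_madd_l, mmul_mscale_r, mmul_mscale_l.
  extensionality i; extensionality j. unfold madd, mscale. Cring. Qed.

Lemma powdiff n K X Y R0 E0 r0 e0 : 0 <= K -> 0 <= e0 -> opnorm_le n X K -> opnorm_le n Y K ->
  meq n (msub X Y) (madd R0 E0) -> lr n r0 R0 -> opnorm_le n E0 e0 ->
  forall k, exists Rk Ek, meq n (msub (mpow n X k) (mpow n Y k)) (madd Rk Ek) /\ lr n (k * r0) Rk /\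
     opnorm_le n Ek (INR k * (K + 1) ^ k * e0).
Proof. intros HK He HX HY HD HR HE k. induction k.
  - exists mzero, mzero. split. intros i j _ _. unfold msub, madd, mscale, mzero. simpl. Cring.
    split. apply lr_zero. simpl. replace (0 * 1 * e0) with 0 by ring. apply opnorm_zero.
  - destruct IHk as [Rk [Ek [H1 [H2 H3]]]]. simpl mpow. rewrite msub_mul_split.
    exists (madd (mmul n X Rk) (mmul n R0 (mpow n Y k))), (madd (mmul n X Ek) (mmul n E0 (mpow n Y k))).
    split. eapply meq_trans. apply (meq_madd n _ (mmul n X (madd Rk Ek)) _ (mmul n (madd R0 E0) (mpow n Y k))); apply meq_mmul; auto using meq_refl.
    rewrite mmul_madd_r, mmul_madd_l. intros i j _ _. unfold madd. Cring.
    split. replace (S k * r0)%nat with (k * r0 + r0)%nat by lia. apply lr_add. apply lr_mul_l; auto. apply lr_mul_r; auto.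
    eapply opnorm_mono. 2: { apply opnorm_add. apply opnorm_mul. exact HK. exact HX. exact H3. apply opnorm_mul. exact He. exact HE. apply opnorm_pow. exact HK. exact HY. }
    rewrite S_INR. assert (h1 := pos_INR k). assert (h2 : 0 <= (K+1)^k) by (apply pow_le; lra).
    assert (h3 : K ^ k <= (K+1)^k) by (apply pow_incr; lra). simpl.
    assert (K * (INR k * (K + 1) ^ k * e0) <= INR k * ((K + 1) * (K + 1) ^ k) * e0).
    { replace (INR k * ((K + 1) * (K + 1) ^ k) * e0) with ((K+1) * (INR k * (K + 1) ^ k * e0)) by ring.
      apply Rmult_le_compat_r. apply Rmult_le_pos; auto; apply Rmult_le_pos; auto. lra. }
    assert (e0 * K ^ k <= 1 * ((K + 1) * (K + 1) ^ k) * e0). { replace (1 * ((K + 1) * (K + 1) ^ k) * e0) with (e0 * ((K+1) * (K+1)^k)) by ring.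
      apply Rmult_le_compat_l; auto. nra. }
    lra.
Qed.

Fixpoint nsum (p : nat) (g : nat -> nat) : nat := match p with O => O | S q => (nsum q g + g q)%nat end.
Lemma nsum_mul p g r : nsum p (fun m => g m * r)%nat = (nsum p g * r)%nat.
Proof. induction p; simpl; auto. rewrite IHp. lia. Qed.

Lemma sum_decomp n (D : nat -> Mat) (c : nat -> R) (rr : nat -> nat) (bb : nat -> R) :
  (forall m, exists R E, meq n (D m) (madd R E) /\ lr n (rr m) R /\ opnorm_le n E (bb m)) ->
  forall p, exists R E, meq n (fun i j => Csum p (fun m => Cscale (c m) (D m i j))) (madd R E) /\
    lr n (nsum p rr) R /\ opnorm_le n E (Rsum p (fun m => Rabs (c m) * bb m)).
Proof. intros H p. induction p.
  - exists mzero, mzero. split. intros i j _ _. unfold madd, mzero; simpl. Cring. split. apply lr_zero. apply opnorm_zero.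
  - destruct IHp as [R [E [H1 [H2 H3]]]]. destruct (H p) as [R' [E' [H1' [H2' H3']]]].
    exists (madd R (mscale (RtoC (c p)) R')), (madd E (mscale (RtoC (c p)) E')).
    split. intros i j Hi Hj. simpl. rewrite H1, H1' by auto. unfold madd, mscale. Cring.
    split. simpl. apply lr_add; auto. apply lr_scale; auto.
    simpl. apply opnorm_add; auto. replace (Rabs (c p) * bb p) with (Cmd (RtoC (c p)) * bb p). apply opnorm_scale; auto.
    f_equal. unfold Cmd, Cnorm2, RtoC; simpl. rewrite <- sqrt_Rsqr_abs. f_equal. unfold Rsqr; ring.
Qed.

Definition tj (K : R) (j : nat) : R := K ^ j / INR (fact j).
Lemma tj_nonneg K j : 0 <= K -> 0 <= tj K j.
Proof. intros. unfold tj. apply Rdiv_le_0_compat_loc. apply pow_le; auto. apply lt_0_INR, lt_O_fact. Qed.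
Lemma tj_step K j : 0 <= K -> 2 * K <= INR (S j) -> tj K (S j) <= tj K j / 2.
Proof. intros HK H. unfold tj. simpl pow. rewrite fact_simpl, mult_INR.
  assert (0 < INR (fact j)) by apply lt_0_INR, lt_O_fact. assert (0 < INR (S j)) by (apply lt_0_INR; lia).
  assert (0 <= K ^ j) by (apply pow_le; auto).
  replace (K * K ^ j / (INR (S j) * INR (fact j))) with ((K / INR (S j)) * (K ^ j / INR (fact j))) by (field; lra).
  replace (K ^ j / INR (fact j) / 2) with (/2 * (K ^ j / INR (fact j))) by (field; lra).
  apply Rmult_le_compat_r. apply Rdiv_le_0_compat_loc; auto.
  apply Rmult_le_reg_r with (INR (S j)); auto. unfold Rdiv. rewrite Rmult_assoc, Rinv_l; lra. Qed.

Lemma tail_geo K J : 0 <= K -> 2 * K <= INR (S J) ->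
  forall p, Rsum p (fun q => tj K (J + 2 * q)) + 2 * tj K (J + 2 * p) <= 2 * tj K J.
Proof. intros HK HJ p. induction p. simpl. rewrite Nat.add_0_r. lra.
  cbn [Rsum]. replace (J + 2 * S p)%nat with (S (S (J + 2 * p))) by lia.
  assert (Hi: forall j, (J <= j)%nat -> 2 * K <= INR (S j)). { intros j Hj. eapply Rle_trans. apply HJ. apply le_INR. lia. }
  assert (h1 := tj_step K (S (J + 2 * p)) HK (Hi (S (J + 2 * p))%nat ltac:(lia))). assert (h2 := tj_step K (J + 2 * p) HK (Hi (J + 2 * p)%nat ltac:(lia))).
  assert (h3 := tj_nonneg K (J + 2 * p) HK). lra. Qed.

Lemma sp_term n X r k : (fun i j => Cscale r (mpow n X k i j)) = mscale (RtoC r) (mpow n X k).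
Proof. extensionality i; extensionality j. unfold mscale. Cring. Qed.

Lemma Cmd_RtoC r : Cmd (RtoC r) = Rabs r.
Proof. unfold Cmd, Cnorm2, RtoC; simpl. rewrite <- sqrt_Rsqr_abs. f_equal. unfold Rsqr; ring. Qed.

Lemma sp_tail n X K L : 0 <= K -> opnorm_le n X K -> forall p,
  opnorm_le n (msub (sin_partial n X (L + p)) (sin_partial n X L)) (Rsum p (fun q => tj K (2 * L + 3 + 2 * q))).
Proof. intros HK HX p. induction p.
  - simpl. rewrite Nat.add_0_r. eapply opnorm_ext. 2: apply opnorm_zero. intros i j _ _. unfold msub, madd, mscale, mzero. Cring.
  - replace (L + S p)%nat with (S (L + p)) by lia.
    assert (E: msub (sin_partial n X (S (L + p))) (sin_partial n X L) =
       madd (msub (sin_partial n X (L + p)) (sin_partial n X L)) (mscale (RtoC ((-1) ^ (S (L+p)) / INR (fact (2 * S (L + p) + 1)))) (mpow n X (2 * S (L + p) + 1)))).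
    { extensionality i; extensionality j. unfold msub, madd, mscale, sin_partial. simpl Csum. Cring. }
    rewrite E. cbn [Rsum]. apply opnorm_add. exact IHp.
    replace (tj K (2 * L + 3 + 2 * p)) with (Cmd (RtoC ((-1) ^ S (L + p) / INR (fact (2 * S (L + p) + 1)))) * K ^ (2 * S (L + p) + 1)).
    apply opnorm_scale. apply opnorm_pow; auto.
    rewrite Cmd_RtoC. unfold tj. replace (2 * L + 3 + 2 * p)%nat with (2 * S (L + p) + 1)%nat by lia.
    unfold Rdiv. rewrite Rabs_mult, pow_1_abs, Rabs_inv, Rabs_right. ring. apply Rle_ge, pos_INR. Qed.

Lemma ev_le (u : nat -> R) l c N0 : Un_cv u l -> (forall N, (N0 <= N)%nat -> u N <= c) -> l <= c.
Proof. intros Hu H. destruct (Rle_or_lt l c); auto. destruct (Hu (l - c)) as [N1 HN1]. lra.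
  specialize (HN1 (Nat.max N0 N1) ltac:(lia)). specialize (H (Nat.max N0 N1) ltac:(lia)). unfold R_dist in HN1.
  apply Rabs_def2 in HN1. lra. Qed.

Lemma cv_const (c : R) : Un_cv (fun _ => c) c.
Proof. intros e He. exists O. intros. unfold R_dist. rewrite Rminus_diag, Rabs_R0. auto. Qed.

Lemma Un_cv_ext (u u' : nat -> R) l : (forall N, u N = u' N) -> Un_cv u l -> Un_cv u' l.
Proof. intros E H e He. destruct (H e He) as [N HN]. exists N. intros m Hm. rewrite <- E. auto. Qed.

Lemma Rsum_cv n (F : nat -> nat -> R) (G : nat -> R) : (forall i, (i < n)%nat -> Un_cv (fun N => F N i) (G i)) ->
  Un_cv (fun N => Rsum n (F N)) (Rsum n G).
Proof. induction n; intros H; simpl. apply cv_const. apply CV_plus. apply IHn; intros; apply H; lia. apply H; lia. Qed.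

Lemma opnorm_limit n (Z : nat -> Mat) T c N0 : 0 <= c ->
  (forall i j, (i < n)%nat -> (j < n)%nat -> Un_cv (fun N => fst (Z N i j)) (fst (T i j)) /\ Un_cv (fun N => snd (Z N i j)) (snd (T i j))) ->
  (forall N, (N0 <= N)%nat -> opnorm_le n (Z N) c) -> opnorm_le n T c.
Proof. intros Hc HZ HN v.
  assert (Hcv: Un_cv (fun N => nsq n (mvmul n (Z N) v)) (nsq n (mvmul n T v))).
  { unfold nsq. apply Rsum_cv. intros i Hi. unfold Cnorm2, mvmul.
    assert (A1: Un_cv (fun N => fst (Csum n (fun l => Cmul (Z N i l) (v l)))) (fst (Csum n (fun l => Cmul (T i l) (v l))))).
    { apply Un_cv_ext with (fun N => Rsum n (fun l => fst (Cmul (Z N i l) (v l)))). intros; rewrite fst_Csum; auto.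
      rewrite fst_Csum. apply Rsum_cv. intros l Hl. destruct (HZ i l Hi Hl). unfold Cmul; simpl. apply CV_minus; apply CV_mult; auto; apply cv_const. }
    assert (A2: Un_cv (fun N => snd (Csum n (fun l => Cmul (Z N i l) (v l)))) (snd (Csum n (fun l => Cmul (T i l) (v l))))).
    { apply Un_cv_ext with (fun N => Rsum n (fun l => snd (Cmul (Z N i l) (v l)))). intros; rewrite snd_Csum; auto.
      rewrite snd_Csum. apply Rsum_cv. intros l Hl. destruct (HZ i l Hi Hl). unfold Cmul; simpl. apply CV_plus; apply CV_mult; auto; apply cv_const. }
    apply CV_plus; apply CV_mult; auto. }
  assert (Hb: nsq n (mvmul n T v) <= (c * vnorm n v) * (c * vnorm n v)).
  { eapply ev_le. apply Hcv. intros N HN0. cbv beta. rewrite <- vnorm_sq. specialize (HN N HN0 v).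
    assert (0 <= vnorm n (mvmul n (Z N) v)) by apply vnorm_nonneg. nra. }
  unfold vnorm at 1. rewrite <- (sqrt_square (c * vnorm n v)). apply sqrt_le_1_alt. auto.
  apply Rmult_le_pos; auto; apply vnorm_nonneg. Qed.

Lemma Un_cv_eq (u : nat -> R) l l' : Un_cv u l -> l = l' -> Un_cv u l'.
Proof. intros H E; subst; auto. Qed.

Definition sc (m : nat) : R := (-1) ^ m / INR (fact (2 * m + 1)).

Lemma tail_bound n X SX K L : 0 <= K -> 2 * K <= INR (S (2 * L + 3)) -> opnorm_le n X K -> is_msin n X SX ->
  opnorm_le n (msub SX (sin_partial n X L)) (2 * tj K (2 * L + 3)).
Proof. intros HK HL HX HS.
  apply opnorm_limit with (Z := fun N => msub (sin_partial n X N) (sin_partial n X L)) (N0 := L).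
  assert (0 <= tj K (2 * L + 3)) by (apply tj_nonneg; auto). lra.
  - intros i j Hi Hj. destruct (HS i j Hi Hj) as [C1 C2]. split.
    + apply Un_cv_ext with (fun N => fst (sin_partial n X N i j) - fst (sin_partial n X L i j)).
      intros; unfold msub, madd, mscale, RtoC, Cmul, Cadd, Cre, Cim; simpl; ring.
      eapply Un_cv_eq. apply CV_minus. apply C1. apply cv_const. unfold msub, madd, mscale, RtoC, Cmul, Cadd, Cre, Cim; simpl; ring.
    + apply Un_cv_ext with (fun N => snd (sin_partial n X N i j) - snd (sin_partial n X L i j)).
      intros; unfold msub, madd, mscale, RtoC, Cmul, Cadd, Cre, Cim; simpl; ring.
      eapply Un_cv_eq. apply CV_minus. apply C2. apply cv_const. unfold msub, madd, mscale, RtoC, Cmul, Cadd, Cre, Cim; simpl; ring.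
  - intros N HN. replace N with (L + (N - L))%nat by lia. eapply opnorm_mono. 2: apply (sp_tail n X K L HK HX).
    pose proof (tail_geo K (2 * L + 3) HK HL (N - L)). assert (0 <= tj K (2 * L + 3 + 2 * (N - L))) by (apply tj_nonneg; auto). lra.
Qed.

Lemma sin_decomp K eta : 0 <= K -> 0 < eta -> exists q e0, 0 < e0 /\
  forall n r0 X Y SX SY R0 E0, opnorm_le n X K -> opnorm_le n Y K -> is_msin n X SX -> is_msin n Y SY ->
  meq n (msub X Y) (madd R0 E0) -> lr n r0 R0 -> opnorm_le n E0 e0 ->
  exists R E, meq n (msub SX SY) (madd R E) /\ lr n (q * r0) R /\ opnorm_le n E eta.
Proof. intros HK Heta.
  destruct (cv_speed_pow_fact K (eta / 6) ltac:(lra)) as [N1 HN1].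
  set (L := (N1 + Z.to_nat (up K))%nat).
  assert (HLK: K <= INR L). { unfold L. rewrite plus_INR. destruct (archimed K) as [h1 h2].
    assert (0 <= IZR (up K)) by lra. assert ((0 <= up K)%Z) by (apply le_IZR; auto).
    rewrite (INR_IZR_INZ (Z.to_nat (up K))), Z2Nat.id by auto. assert (0 <= INR N1) by apply pos_INR. lra. }
  set (B := Rsum (S L) (fun m => Rabs (sc m) * (INR (2 * m + 1) * (K + 1) ^ (2 * m + 1)))).
  assert (HB: 0 <= B). { apply Rsum_nonneg. intros. apply Rmult_le_pos. apply Rabs_pos. apply Rmult_le_pos. apply pos_INR. apply pow_le; lra. }
  exists (nsum (S L) (fun m => 2 * m + 1)%nat), (eta / (3 * (B + 1))). split. apply Rdiv_lt_0_compat; lra.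
  intros n r0 X Y SX SY R0 E0 HX HY HSX HSY HD HR HE.
  set (e0 := eta / (3 * (B + 1))).
  assert (He0: 0 <= e0) by (unfold e0; apply Rdiv_le_0_compat_loc; lra).
  assert (Hpd := powdiff n K X Y R0 E0 r0 e0 HK He0 HX HY HD HR HE).
  destruct (sum_decomp n (fun m => msub (mpow n X (2 * m + 1)) (mpow n Y (2 * m + 1))) sc (fun m => (2 * m + 1) * r0)%nat
     (fun m => INR (2 * m + 1) * (K + 1) ^ (2 * m + 1) * e0) ltac:(intros m; apply Hpd) (S L)) as [R [E1 [H1 [H2 H3]]]].
  assert (Ht: 2 * K <= INR (S (2 * L + 3))). { eapply Rle_trans. 2: apply le_INR with (n := (2 * L)%nat); lia. rewrite mult_INR. simpl. lra. }
  assert (TX := tail_bound n X SX K L HK Ht HX HSX). assert (TY := tail_bound n Y SY K L HK Ht HY HSY).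
  exists R, (madd E1 (msub (msub SX (sin_partial n X L)) (msub SY (sin_partial n Y L)))).
  split; [|split].
  - intros i j Hi Hj.
    assert (E: msub SX SY i j = Cadd (Csum (S L) (fun m => Cscale (sc m) (msub (mpow n X (2 * m + 1)) (mpow n Y (2 * m + 1)) i j)))
              (msub (msub SX (sin_partial n X L)) (msub SY (sin_partial n Y L)) i j)).
    { unfold msub at 3 4 5. unfold madd, mscale. 
      rewrite (Csum_ext (S L) _ (fun m => Cadd (Cscale (sc m) (mpow n X (2 * m + 1) i j)) (Cmul (RtoC (-1)) (Cscale (sc m) (mpow n Y (2 * m + 1) i j))))).
      rewrite Csum_add, Csum_mul_l. unfold sin_partial, sc. unfold msub, madd, mscale. Cring.
      intros; unfold msub, madd, mscale. Cring. }
    rewrite E. rewrite (H1 i j Hi Hj). unfold madd. Cring.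
  - rewrite <- nsum_mul. auto.
  - eapply opnorm_mono. 2: { apply opnorm_add. exact H3. apply opnorm_msub. exact TX. exact TY. }
    assert (Rsum (S L) (fun m => Rabs (sc m) * (INR (2 * m + 1) * (K + 1) ^ (2 * m + 1) * e0)) = B * e0).
    { unfold B. rewrite Rmult_comm, <- Rsum_scal. apply Rsum_ext; intros; ring. }
    rewrite H. assert (B * e0 <= eta / 3). { unfold e0. apply Rmult_le_reg_r with (3 * (B + 1)). lra.
      field_simplify; lra. }
    assert (h := HN1 (2 * L + 3)%nat ltac:(unfold L; lia)). unfold R_dist in h. rewrite Rminus_0_r in h.
    apply Rabs_def2 in h. unfold tj. lra.
Qed.

Definition RI (f : R -> R) (v : R) : Prop := is_RInt f (-PI) PI v.

Lemma RI_plus f g x y : RI f x -> RI g y -> RI (fun t => f t + g t) (x + y).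
Proof. intros H1 H2. exact (is_RInt_plus f g _ _ _ _ H1 H2). Qed.
Lemma RI_scal c f x : RI f x -> RI (fun t => c * f t) (c * x).
Proof. intros H1. exact (is_RInt_scal f _ _ c _ H1). Qed.
Lemma RI_opp f x : RI f x -> RI (fun t => - f t) (- x).
Proof. intros H1. exact (is_RInt_opp f _ _ _ H1). Qed.
Lemma RI_minus f g x y : RI f x -> RI g y -> RI (fun t => f t - g t) (x - y).
Proof. intros H1 H2. exact (is_RInt_minus f g _ _ _ _ H1 H2). Qed.
Lemma RI_const c : RI (fun _ => c) (2 * PI * c).
Proof. unfold RI. pose proof (@is_RInt_const R_NormedModule (-PI) PI c) as H.
  replace (2 * PI * c) with (scal (PI - - PI) c : R). exact H.
  change (scal (PI - - PI) c) with ((PI - - PI) * c). ring. Qed.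
Lemma RI_ext f g v : (forall t, -PI < t < PI -> f t = g t) -> RI f v -> RI g v.
Proof. intros E H. apply is_RInt_ext with f; auto. intros x Hx. rewrite Rmin_left, Rmax_right in Hx.
  apply E; auto. assert (h:=PI_RGT_0); lra. assert (h:=PI_RGT_0); lra. Qed.
Lemma RI_eq f v v' : RI f v -> v = v' -> RI f v'.
Proof. intros H E; subst; auto. Qed.
Lemma RI_le f g x y : RI f x -> RI g y -> (forall t, -PI < t < PI -> f t <= g t) -> x <= y.
Proof. intros H1 H2 H. apply (is_RInt_le f g (-PI) PI x y); auto. assert (h:=PI_RGT_0); lra. Qed.
Lemma RI_Rsum n (F : nat -> R -> R) (v : nat -> R) : (forall l, (l < n)%nat -> RI (F l) (v l)) ->
  RI (fun t => Rsum n (fun l => F l t)) (Rsum n v).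
Proof. induction n; intros H; simpl. eapply RI_eq. apply RI_const. ring.
  apply RI_plus. apply IHn; intros; apply H; lia. apply H; lia. Qed.

Lemma RI_derive (F f : R -> R) : (forall x, is_derive F x (f x)) -> (forall x, continuous f x) -> RI f (F PI - F (-PI)).
Proof. intros H1 H2. exact (@is_RInt_derive R_CompleteNormedModule F f (-PI) PI (fun x _ => H1 x) (fun x _ => H2 x)). Qed.

Lemma sin_kpi (k : Z) : sin (IZR k * PI) = 0.
Proof. apply sin_eq_0_1. exists k; auto. Qed.

Lemma RI_cos (k : Z) : RI (fun t => cos (IZR k * t)) (if Z.eqb k 0 then 2 * PI else 0).
Proof. destruct (Z.eqb k 0) eqn:E.
  - apply Z.eqb_eq in E; subst. eapply RI_ext. 2: apply (RI_eq _ _ _ (RI_const 1)). intros; simpl. rewrite Rmult_0_l, cos_0; auto. ring.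
  - apply Z.eqb_neq in E. assert (Hk: IZR k <> 0) by (apply not_0_IZR; auto).
    eapply RI_eq. apply (RI_derive (fun t => sin (IZR k * t) / IZR k)). intros x. auto_derive. auto. field; auto.
    intros x. apply (@ex_derive_continuous R_AbsRing R_NormedModule). auto_derive. auto. replace (IZR k * - PI) with (- (IZR k * PI)) by ring. rewrite sin_neg, sin_kpi. field; auto.
Qed.

Lemma RI_sin (k : Z) : RI (fun t => sin (IZR k * t)) 0.
Proof. destruct (Z.eq_dec k 0) as [E|E].
  - subst. eapply RI_ext. 2: apply (RI_eq _ _ _ (RI_const 0)). intros; simpl. rewrite Rmult_0_l, sin_0; auto. ring.
  - assert (Hk: IZR k <> 0) by (apply not_0_IZR; auto).
    eapply RI_eq. apply (RI_derive (fun t => - cos (IZR k * t) / IZR k)). intros x. auto_derive. auto. field; auto.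
    intros x. apply (@ex_derive_continuous R_AbsRing R_NormedModule). auto_derive. auto. replace (IZR k * - PI) with (- (IZR k * PI)) by ring. rewrite cos_neg. field; auto.
Qed.

Definition EE (x : R) : Cx := (cos x, sin x).
Definition FC (h : R -> Cx) (c : Z -> Cx) : Prop := forall k,
  RI (fun t => fst (Cmul (h t) (cexp_neg k t))) (2 * PI * fst (c k)) /\
  RI (fun t => snd (Cmul (h t) (cexp_neg k t))) (2 * PI * snd (c k)).
Definition dlt (k : Z) : Cx := if Z.eqb k 0 then C1 else C0.

Lemma FC_of_fourier f a : (forall k, is_fourier_coeff f k (a k)) -> FC f a.
Proof. intros H k. destruct (H k) as [[pr1 E1] [pr2 E2]]. split.
  - unfold RI, Cre, Cim in *. rewrite <- E1. rewrite <- RInt_Reals. apply (@RInt_correct R_CompleteNormedModule). apply ex_RInt_Reals_1; auto.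
  - unfold RI, Cre, Cim in *. rewrite <- E2. rewrite <- RInt_Reals. apply (@RInt_correct R_CompleteNormedModule). apply ex_RInt_Reals_1; auto.
Qed.

Lemma FC_one : FC (fun _ => C1) dlt.
Proof. intros k. split.
  - eapply RI_ext. 2: apply (RI_eq _ _ _ (RI_cos k)). intros t _. unfold Cmul, C1, cexp_neg; simpl. ring.
    unfold dlt. destruct (Z.eqb k 0); unfold C1, C0; simpl; ring.
  - eapply RI_ext. 2: apply (RI_eq _ _ _ (RI_opp _ _ (RI_sin k))). intros t _. unfold Cmul, C1, cexp_neg; simpl. ring.
    unfold dlt. destruct (Z.eqb k 0); unfold C1, C0; simpl; ring.
Qed.

Lemma FC_ext_c h c c' : FC h c -> (forall k, c k = c' k) -> FC h c'.
Proof. intros H E k. rewrite <- E. apply H. Qed.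
Lemma FC_ext_h h h' c : FC h c -> (forall t, -PI < t < PI -> h t = h' t) -> FC h' c.
Proof. intros H E k. destruct (H k). split; eapply RI_ext; eauto; intros; simpl; rewrite E; auto. Qed.
Lemma FC_scale h c z : FC h c -> FC (fun t => Cmul z (h t)) (fun k => Cmul z (c k)).
Proof. intros H k. destruct (H k) as [H1 H2]. split.
  - eapply RI_ext. 2: apply (RI_eq _ _ _ (RI_minus _ _ _ _ (RI_scal (fst z) _ _ H1) (RI_scal (snd z) _ _ H2))).
    intros; unfold Cmul; simpl; ring. unfold Cmul; simpl; ring.
  - eapply RI_ext. 2: apply (RI_eq _ _ _ (RI_plus _ _ _ _ (RI_scal (fst z) _ _ H2) (RI_scal (snd z) _ _ H1))).
    intros; unfold Cmul; simpl; ring. unfold Cmul; simpl; ring.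
Qed.
Lemma FC_add h1 h2 c1 c2 : FC h1 c1 -> FC h2 c2 -> FC (fun t => Cadd (h1 t) (h2 t)) (fun k => Cadd (c1 k) (c2 k)).
Proof. intros H1 H2 k. destruct (H1 k) as [A1 B1]; destruct (H2 k) as [A2 B2]. split.
  - eapply RI_ext. 2: apply (RI_eq _ _ _ (RI_plus _ _ _ _ A1 A2)). intros; unfold Cmul, Cadd; simpl; ring. unfold Cadd; simpl; ring.
  - eapply RI_ext. 2: apply (RI_eq _ _ _ (RI_plus _ _ _ _ B1 B2)). intros; unfold Cmul, Cadd; simpl; ring. unfold Cadd; simpl; ring.
Qed.
Lemma FC_sum N (g : nat -> R -> Cx) (d : nat -> Z -> Cx) : (forall l, (l < N)%nat -> FC (g l) (d l)) ->
  FC (fun t => Csum N (fun l => g l t)) (fun k => Csum N (fun l => d l k)).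
Proof. induction N; intros H; simpl.
  - eapply FC_ext_h. eapply FC_ext_c. apply (FC_scale _ _ C0 FC_one). intros; Cring. intros; Cring.
  - apply FC_add. apply IHN; intros; apply H; lia. apply H; lia. Qed.

Lemma cexp_split (j k : Z) t : Cmul (EE (IZR j * t)) (cexp_neg k t) = cexp_neg (k - j) t.
Proof. unfold EE, cexp_neg, Cmul; simpl. rewrite minus_IZR.
  replace ((IZR k - IZR j) * t) with (IZR k * t - IZR j * t) by ring. rewrite cos_minus, sin_minus.
  apply injective_projections; simpl; ring. Qed.

Lemma FC_EE (j : Z) : FC (fun t => EE (IZR j * t)) (fun k => dlt (k - j)).
Proof. intros k. destruct (FC_one (k - j)%Z) as [H1 H2]. split.
  - eapply RI_ext. 2: exact H1. intros. cbv beta. rewrite <- cexp_split. unfold Cmul, C1; simpl. ring.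
  - eapply RI_ext. 2: exact H2. intros. cbv beta. rewrite <- cexp_split. unfold Cmul, C1; simpl. ring.
Qed.

Definition Wf (n : nat) (w : Vec) (t : R) : Cx := Csum n (fun j => Cmul (w j) (EE (INR j * t))).

Lemma cexp_jk (j k : nat) t : cexp_neg (Z.of_nat j - Z.of_nat k) t = Cmul (Cconj (EE (INR j * t))) (EE (INR k * t)).
Proof. unfold EE, cexp_neg, Cmul, Cconj; simpl. rewrite minus_IZR, <- !INR_IZR_INZ.
  replace ((INR j - INR k) * t) with (INR j * t - INR k * t) by ring. rewrite cos_minus, sin_minus.
  apply injective_projections; simpl; ring. Qed.

Lemma rep_pointwise n w v h t :
  Csum n (fun j => Csum n (fun k => Cmul (Cmul (Cconj (w j)) (v k)) (Cmul h (cexp_neg (Z.of_nat j - Z.of_nat k) t))))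
  = Cmul (Cmul h (Cconj (Wf n w t))) (Wf n v t).
Proof. unfold Wf. rewrite <- Csum_mul_l. rewrite Csum_conj, <- Csum_mul_l.
  transitivity (Csum n (fun k => Csum n (fun j => Cmul (Cmul h (Cconj (Cmul (w j) (EE (INR j * t))))) (Cmul (v k) (EE (INR k * t)))))).
  rewrite Csum_swap. apply Csum_ext; intros j _. apply Csum_ext; intros k _. rewrite cexp_jk. Cring.
  apply Csum_ext; intros k _. rewrite <- Csum_mul_r. auto. Qed.

Lemma rep_value n w v c :
  Rsum n (fun j => Rsum n (fun k => fst (Cmul (Cmul (Cconj (w j)) (v k)) (Cscale (2 * PI) (c (Z.of_nat j - Z.of_nat k)%Z)))))
  = 2 * PI * fst (ip n w (mvmul n (toeplitz c) v)).
Proof. unfold ip, mvmul, toeplitz. rewrite fst_Csum, <- Rsum_scal. apply Rsum_ext; intros j _.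
  rewrite <- Csum_mul_l, fst_Csum, <- Rsum_scal. apply Rsum_ext; intros k _. unfold Cmul, Cscale, Cconj; simpl. ring. Qed.

Lemma FC_rep h c n w v : FC h c ->
  RI (fun t => fst (Cmul (Cmul (h t) (Cconj (Wf n w t))) (Wf n v t))) (2 * PI * fst (ip n w (mvmul n (toeplitz c) v))).
Proof. intros H. rewrite <- rep_value.
  apply RI_ext with (f := fun t => Rsum n (fun j => Rsum n (fun k =>
     fst (Cmul (Cconj (w j)) (v k)) * fst (Cmul (h t) (cexp_neg (Z.of_nat j - Z.of_nat k) t)) -
     snd (Cmul (Cconj (w j)) (v k)) * snd (Cmul (h t) (cexp_neg (Z.of_nat j - Z.of_nat k) t))))).
  - intros t _. rewrite <- rep_pointwise. rewrite fst_Csum. apply Rsum_ext; intros j _. rewrite fst_Csum. apply Rsum_ext; intros k _.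
    unfold Cmul at 1; simpl. reflexivity.
  - apply (RI_Rsum n (fun j t => Rsum n (fun k =>
     fst (Cmul (Cconj (w j)) (v k)) * fst (Cmul (h t) (cexp_neg (Z.of_nat j - Z.of_nat k) t)) -
     snd (Cmul (Cconj (w j)) (v k)) * snd (Cmul (h t) (cexp_neg (Z.of_nat j - Z.of_nat k) t))))).
    intros j _. apply (RI_Rsum n (fun k t =>
     fst (Cmul (Cconj (w j)) (v k)) * fst (Cmul (h t) (cexp_neg (Z.of_nat j - Z.of_nat k) t)) -
     snd (Cmul (Cconj (w j)) (v k)) * snd (Cmul (h t) (cexp_neg (Z.of_nat j - Z.of_nat k) t)))).
    intros k _. destruct (H (Z.of_nat j - Z.of_nat k)%Z) as [H1 H2].
    eapply RI_eq. apply (RI_minus _ _ _ _ (RI_scal _ _ _ H1) (RI_scal _ _ _ H2)).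
    unfold Cmul at 3, Cscale; simpl. ring.
Qed.

Lemma toeplitz_dlt n : meq n (toeplitz dlt) mid.
Proof. intros i j Hi Hj. unfold toeplitz, dlt, mid. destruct (Nat.eqb i j) eqn:E.
  apply Nat.eqb_eq in E; subst. rewrite Z.sub_diag. reflexivity.
  apply Nat.eqb_neq in E. destruct (Z.eqb (Z.of_nat i - Z.of_nat j) 0) eqn:E2; auto. apply Z.eqb_eq in E2. lia. Qed.

Lemma parseval n w : RI (fun t => Cnorm2 (Wf n w t)) (2 * PI * nsq n w).
Proof. eapply RI_ext. 2: apply (RI_eq _ _ _ (FC_rep _ _ n w w FC_one)).
  intros t _. unfold Cmul, Cconj, C1, Cnorm2; simpl. ring.
  rewrite <- fst_ip_self. f_equal. f_equal. unfold ip. apply Csum_ext; intros i Hi. f_equal.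
  rewrite <- (mvmul_mid n w i Hi). unfold mvmul. apply Csum_ext; intros l Hl. rewrite (toeplitz_dlt n i l Hi Hl). auto. Qed.

Lemma toeplitz_bound h c K n : FC h c -> 0 <= K -> (forall t, -PI < t < PI -> Cmd (h t) <= K) ->
  opnorm_le n (toeplitz c) K.
Proof. intros H HK Hb. apply bil_opnorm; auto. intros v w lam Hl.
  assert (HP := PI_RGT_0).
  assert (A := FC_rep h c n w v H).
  assert (B := RI_plus _ _ _ _ (RI_scal (K / 2 * lam) _ _ (parseval n w)) (RI_scal (K / 2 / lam) _ _ (parseval n v))).
  assert (L := RI_le _ _ _ _ A B). 
  assert (2 * PI * fst (ip n w (mvmul n (toeplitz c) v)) <= 2 * PI * (K / 2 * (lam * nsq n w + nsq n v / lam))).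
  { eapply Rle_trans. apply L. intros t Ht. 
    eapply Rle_trans. apply Cre_le_Cmd. rewrite !Cmd_mul, Cmd_conj.
    assert (h1 := Cmd_nonneg (h t)). assert (h2 := Cmd_nonneg (Wf n w t)). assert (h3 := Cmd_nonneg (Wf n v t)).
    assert (Cmd (h t) * Cmd (Wf n w t) * Cmd (Wf n v t) <= K * (Cmd (Wf n w t) * Cmd (Wf n v t))).
    { rewrite Rmult_assoc. apply Rmult_le_compat_r. nra. auto. }
    eapply Rle_trans. apply H0. rewrite <- !Cmd_sq.
    assert (h4 := amgm (Cmd (Wf n w t)) (Cmd (Wf n v t)) lam Hl).
    replace (K / 2 * lam * (Cmd (Wf n w t) * Cmd (Wf n w t)) + K / 2 / lam * (Cmd (Wf n v t) * Cmd (Wf n v t)))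
      with (K * ((lam * (Cmd (Wf n w t) * Cmd (Wf n w t)) + Cmd (Wf n v t) * Cmd (Wf n v t) / lam) / 2)) by (field; lra).
    apply Rmult_le_compat_l; auto.
    right. field. lra. }
  apply Rmult_le_reg_l with (2 * PI). lra. auto.
Qed.

Definition tpoly (m : nat) (b : Z -> Cx) (t : R) : Cx :=
  Csum (2 * m + 1) (fun l => Cmul (b (Z.of_nat l - Z.of_nat m)%Z) (EE (IZR (Z.of_nat l - Z.of_nat m) * t))).

Lemma delta_sum m (b : Z -> Cx) k : (forall j, (Z.of_nat m < Z.abs j)%Z -> b j = C0) ->
  Csum (2 * m + 1) (fun l => Cmul (b (Z.of_nat l - Z.of_nat m)%Z) (dlt (k - (Z.of_nat l - Z.of_nat m)))) = b k.
Proof. intros Hb. destruct (Z_le_gt_dec (Z.abs k) (Z.of_nat m)) as [Hk|Hk].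
  - set (l0 := Z.to_nat (k + Z.of_nat m)). assert (Hl0: (l0 < 2 * m + 1)%nat) by (unfold l0; lia).
    rewrite <- (Csum_delta (2 * m + 1) l0 (b k) Hl0). apply Csum_ext; intros l Hl.
    unfold dlt. destruct (Nat.eqb l l0) eqn:E.
    + apply Nat.eqb_eq in E. subst l. replace (Z.of_nat l0 - Z.of_nat m)%Z with k by (unfold l0; lia).
      rewrite Z.sub_diag. simpl. Cring.
    + apply Nat.eqb_neq in E. destruct (Z.eqb (k - (Z.of_nat l - Z.of_nat m)) 0) eqn:E2.
      apply Z.eqb_eq in E2. exfalso; apply E. unfold l0. lia. Cring.
  - rewrite Hb by lia. rewrite <- (Csum_zero (2 * m + 1)). apply Csum_ext; intros l Hl.
    unfold dlt. destruct (Z.eqb (k - (Z.of_nat l - Z.of_nat m)) 0) eqn:E2.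
    apply Z.eqb_eq in E2. lia. Cring.
Qed.

Lemma FC_tpoly m b : (forall j, (Z.of_nat m < Z.abs j)%Z -> b j = C0) -> FC (tpoly m b) b.
Proof. intros Hb. eapply FC_ext_c. 2: intros k; apply delta_sum; auto.
  unfold tpoly. apply (FC_sum (2 * m + 1) (fun l t => Cmul (b (Z.of_nat l - Z.of_nat m)%Z) (EE (IZR (Z.of_nat l - Z.of_nat m) * t)))
     (fun l k => Cmul (b (Z.of_nat l - Z.of_nat m)%Z) (dlt (k - (Z.of_nat l - Z.of_nat m))))).
  intros l _. apply FC_scale with (h := fun t => EE (IZR (Z.of_nat l - Z.of_nat m) * t)) (c := fun k => dlt (k - (Z.of_nat l - Z.of_nat m))).
  apply FC_EE. auto.
Qed.

Lemma sym_sum m (g : Z -> R) : Rsum (2 * m + 1) (fun l => g (Z.of_nat l - Z.of_nat m)%Z) =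
  g 0%Z + Rsum m (fun i => g (Z.of_nat (S i)) + g (- Z.of_nat (S i))%Z).
Proof. induction m.
  - simpl. ring.
  - replace (2 * S m + 1)%nat with (S (S (2 * m + 1))) by lia.
    rewrite Rsum_first. change (Rsum (S (2 * m + 1)) ?F) with (Rsum (2 * m + 1) F + F (2 * m + 1)%nat).
    rewrite (Rsum_ext (2 * m + 1) _ (fun l => g (Z.of_nat l - Z.of_nat m)%Z)) by (intros; f_equal; lia).
    rewrite IHm. cbn [Rsum].
    replace (Z.of_nat 0 - Z.of_nat (S m))%Z with (- Z.of_nat (S m))%Z by lia.
    replace (Z.of_nat (S (2 * m + 1)) - Z.of_nat (S m))%Z with (Z.of_nat (S m)) by lia. ring.
Qed.

Lemma EE_add a b : Cmul (EE a) (EE b) = EE (a + b).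
Proof. unfold EE, Cmul; simpl. rewrite cos_plus, sin_plus. apply injective_projections; simpl; ring. Qed.
Lemma Cnorm2_EE a : Cnorm2 (EE a) = 1.
Proof. unfold EE, Cnorm2; simpl. pose proof (sin2_cos2 a). unfold Rsqr in H. lra. Qed.
Lemma Cnorm2_mul z w : Cnorm2 (Cmul z w) = Cnorm2 z * Cnorm2 w.
Proof. unfold Cnorm2, Cmul; simpl; ring. Qed.

Definition Sm (m : nat) (u : R) : Cx := Csum (S m) (fun j => EE (INR j * u)).
Lemma Sm_succ m u : Sm (S m) u = Cadd C1 (Cmul (EE u) (Sm m u)).
Proof. unfold Sm. rewrite Csum_first. f_equal. unfold EE, C1. rewrite Rmult_0_l, cos_0, sin_0; auto.
  rewrite <- Csum_mul_l. apply Csum_ext; intros. rewrite EE_add. f_equal. rewrite S_INR; ring. Qed.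
Lemma Sm_tele m u : Cmul (Sm m u) (Cadd C1 (Cscale (-1) (EE u))) = Cadd C1 (Cscale (-1) (EE (INR (S m) * u))).
Proof. induction m.
  - unfold Sm. simpl. unfold EE. rewrite Rmult_0_l, Rmult_1_l, cos_0, sin_0. Cring.
  - rewrite Sm_succ. transitivity (Cadd (Cadd C1 (Cscale (-1) (EE u))) (Cmul (EE u) (Cmul (Sm m u) (Cadd C1 (Cscale (-1) (EE u)))))).
    Cring. rewrite IHm. rewrite (S_INR (S m)). replace ((INR (S m) + 1) * u) with (u + INR (S m) * u) by ring.
    rewrite <- EE_add. Cring. Qed.

Definition Hm (m : nat) (u : R) : R := INR m + 1 + 2 * Rsum m (fun i => (INR m - INR i) * cos (INR (S i) * u)).
Lemma norm_Sm m u : Cnorm2 (Sm m u) = Hm m u.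
Proof. induction m.
  - unfold Sm, Hm. simpl. unfold EE. rewrite Rmult_0_l, cos_0, sin_0. unfold Cnorm2; simpl. ring.
  - rewrite Sm_succ. 
    assert (E1: Cnorm2 (Cadd C1 (Cmul (EE u) (Sm m u))) = 1 + 2 * fst (Cmul (EE u) (Sm m u)) + Cnorm2 (Cmul (EE u) (Sm m u))).
    { unfold Cnorm2, Cadd, C1; simpl. ring. }
    rewrite E1, Cnorm2_mul, Cnorm2_EE, IHm.
    assert (E2: fst (Cmul (EE u) (Sm m u)) = Rsum (S m) (fun i => cos (INR (S i) * u))).
    { unfold Sm. rewrite <- Csum_mul_l, fst_Csum. apply Rsum_ext; intros. rewrite EE_add. replace (u + INR l * u) with (INR (S l) * u) by (rewrite S_INR; ring). reflexivity. }
    rewrite E2. unfold Hm.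
    rewrite (Rsum_ext (S m) (fun i => (INR (S m) - INR i) * cos (INR (S i) * u)) (fun i => (INR m - INR i) * cos (INR (S i) * u) + cos (INR (S i) * u)))
      by (intros; rewrite S_INR; ring).
    rewrite Rsum_add. cbn [Rsum]. rewrite Rminus_diag, S_INR. ring.
Qed.

Definition wt (m : nat) (j : Z) : R := 1 - IZR (Z.abs j) / (INR m + 1).
Definition jl (m l : nat) : Z := (Z.of_nat l - Z.of_nat m)%Z.
Definition Fk (m : nat) (u : R) : R := Rsum (2 * m + 1) (fun l => wt m (jl m l) * cos (IZR (jl m l) * u)).

Lemma Fk_eq m u : Fk m u = Hm m u / (INR m + 1).
Proof. unfold Fk, jl. rewrite (sym_sum m (fun j => wt m j * cos (IZR j * u))). unfold Hm, wt.
  assert (0 < INR m + 1) by (assert (h := pos_INR m); lra).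
  rewrite Rmult_0_l, cos_0. change (Z.abs 0) with 0%Z. 
  rewrite (Rsum_ext m _ (fun i => (2 / (INR m + 1)) * ((INR m - INR i) * cos (INR (S i) * u)))).
  rewrite Rsum_scal. field. lra.
  intros i _. rewrite Z.abs_opp, Z.abs_eq by lia. rewrite opp_IZR, <- INR_IZR_INZ.
  replace (- INR (S i) * u) with (- (INR (S i) * u)) by ring. rewrite cos_neg, S_INR. field. lra.
Qed.

Lemma Fk_nonneg m u : 0 <= Fk m u.
Proof. rewrite Fk_eq, <- norm_Sm. apply Rdiv_le_0_compat_loc. apply Cnorm2_nonneg. assert (h := pos_INR m); lra. Qed.

Lemma Fk_small m u gam : 0 < gam -> gam <= 2 - 2 * cos u -> Fk m u <= 4 / (gam * (INR m + 1)).
Proof. intros Hg Hu. rewrite Fk_eq, <- norm_Sm. assert (h := pos_INR m).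
  assert (E := f_equal Cnorm2 (Sm_tele m u)). rewrite Cnorm2_mul in E.
  assert (E1: forall y, Cnorm2 (Cadd C1 (Cscale (-1) (EE y))) = 2 - 2 * cos y).
  { intros y. unfold Cnorm2, Cadd, Cscale, C1, EE; simpl. pose proof (sin2_cos2 y). unfold Rsqr in H. nra. }
  rewrite !E1 in E. assert (cos (INR (S m) * u) >= -1) by (pose proof (COS_bound (INR (S m) * u)); lra).
  assert (h2 := Cnorm2_nonneg (Sm m u)).
  assert (Cnorm2 (Sm m u) * gam <= 4) by nra.
  apply Rmult_le_reg_r with (gam * (INR m + 1)). nra.
  replace (4 / (gam * (INR m + 1)) * (gam * (INR m + 1))) with 4 by (field; lra).
  replace (Cnorm2 (Sm m u) / (INR m + 1) * (gam * (INR m + 1))) with (Cnorm2 (Sm m u) * gam) by (field; lra). lra.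
Qed.

Lemma sin_sum_zero m u : Rsum (2 * m + 1) (fun l => wt m (jl m l) * sin (IZR (jl m l) * u)) = 0.
Proof. unfold jl. rewrite (sym_sum m (fun j => wt m j * sin (IZR j * u))). rewrite Rmult_0_l, sin_0, Rmult_0_r, Rplus_0_l.
  rewrite <- (Rsum_zero m). apply Rsum_ext; intros i _. unfold wt. rewrite Z.abs_opp, opp_IZR.
  replace (- IZR (Z.of_nat (S i)) * u) with (- (IZR (Z.of_nat (S i)) * u)) by ring. rewrite sin_neg. ring. Qed.

Lemma RI_Fk m x : RI (fun t => Fk m (x - t)) (2 * PI).
Proof. unfold Fk.
  apply RI_ext with (f := fun t => Rsum (2 * m + 1) (fun l => wt m (jl m l) * (cos (IZR (jl m l) * x) * cos (IZR (jl m l) * t)) + wt m (jl m l) * (sin (IZR (jl m l) * x) * sin (IZR (jl m l) * t)))).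
  intros t _. apply Rsum_ext; intros. replace (IZR (jl m l) * (x - t)) with (IZR (jl m l) * x - IZR (jl m l) * t) by ring.
  rewrite cos_minus. ring.
  eapply RI_eq. apply (RI_Rsum (2 * m + 1) (fun l t => wt m (jl m l) * (cos (IZR (jl m l) * x) * cos (IZR (jl m l) * t)) + wt m (jl m l) * (sin (IZR (jl m l) * x) * sin (IZR (jl m l) * t)))
    (fun l => wt m (jl m l) * (cos (IZR (jl m l) * x) * (if Z.eqb (jl m l) 0 then 2 * PI else 0)) + wt m (jl m l) * (sin (IZR (jl m l) * x) * 0))).
  intros l _. apply RI_plus; apply RI_scal; apply RI_scal. apply RI_cos. apply RI_sin.
  unfold jl. rewrite (sym_sum m (fun j => wt m j * (cos (IZR j * x) * (if Z.eqb j 0 then 2 * PI else 0)) + wt m j * (sin (IZR j * x) * 0))).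
  rewrite (Rsum_ext m _ (fun _ => 0)). rewrite Rsum_zero. simpl. unfold wt. simpl. rewrite Rmult_0_l, cos_0. field. assert (h := pos_INR m); lra.
  intros i _. replace (Z.eqb (Z.of_nat (S i)) 0) with false by (symmetry; apply Z.eqb_neq; lia).
  replace (Z.eqb (- Z.of_nat (S i)) 0) with false by (symmetry; apply Z.eqb_neq; lia). ring.
Qed.

Definition bF (m : nat) (a : Z -> Cx) (j : Z) : Cx := if Z.leb (Z.abs j) (Z.of_nat m) then Cscale (wt m j) (a j) else C0.

Lemma bF_supp m a j : (Z.of_nat m < Z.abs j)%Z -> bF m a j = C0.
Proof. intros H. unfold bF. replace (Z.leb (Z.abs j) (Z.of_nat m)) with false; auto. symmetry. apply Z.leb_gt. auto. Qed.

Lemma bF_in m a l : (l < 2 * m + 1)%nat -> bF m a (jl m l) = Cscale (wt m (jl m l)) (a (jl m l)).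
Proof. intros H. unfold bF. replace (Z.leb (Z.abs (jl m l)) (Z.of_nat m)) with true; auto. symmetry. apply Z.leb_le. unfold jl. lia. Qed.

Lemma sum_sin_diff m x t : Rsum (2 * m + 1) (fun l => wt m (jl m l) * sin (IZR (jl m l) * (x - t))) = 0.
Proof. apply sin_sum_zero. Qed.

Lemma fejer_rep f a m x : FC f a ->
  RI (fun t => fst (f t) * Fk m (x - t)) (2 * PI * fst (tpoly m (bF m a) x)) /\
  RI (fun t => snd (f t) * Fk m (x - t)) (2 * PI * snd (tpoly m (bF m a) x)).
Proof. intros H. split.
  - apply RI_ext with (f := fun t => Rsum (2 * m + 1) (fun l => (wt m (jl m l) * cos (IZR (jl m l) * x)) * fst (Cmul (f t) (cexp_neg (jl m l) t))
          - (wt m (jl m l) * sin (IZR (jl m l) * x)) * snd (Cmul (f t) (cexp_neg (jl m l) t)))).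
    + intros t _. unfold Fk. rewrite <- Rsum_scal.
      transitivity (Rsum (2 * m + 1) (fun l => fst (f t) * (wt m (jl m l) * cos (IZR (jl m l) * (x - t))) - snd (f t) * (wt m (jl m l) * sin (IZR (jl m l) * (x - t))))).
      apply Rsum_ext; intros l _. unfold Cmul, cexp_neg; simpl. replace (IZR (jl m l) * (x - t)) with (IZR (jl m l) * x - IZR (jl m l) * t) by ring.
      rewrite cos_minus, sin_minus. ring.
      unfold Rminus. rewrite Rsum_add. rewrite (Rsum_ext _ (fun l => - (snd (f t) * (wt m (jl m l) * sin (IZR (jl m l) * (x - t))))) (fun l => -snd (f t) * (wt m (jl m l) * sin (IZR (jl m l) * (x - t))))) by (intros; ring).
      rewrite (Rsum_scal (2 * m + 1) (- snd (f t))), sum_sin_diff. ring.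
    + eapply RI_eq. apply (RI_Rsum (2 * m + 1) (fun l t => (wt m (jl m l) * cos (IZR (jl m l) * x)) * fst (Cmul (f t) (cexp_neg (jl m l) t))
          - (wt m (jl m l) * sin (IZR (jl m l) * x)) * snd (Cmul (f t) (cexp_neg (jl m l) t)))).
      intros l _. destruct (H (jl m l)). apply RI_minus; apply RI_scal; eauto.
      unfold tpoly. rewrite fst_Csum, <- Rsum_scal. apply Rsum_ext; intros l Hl. fold (jl m l). rewrite bF_in by auto.
      unfold Cmul, Cscale, EE; simpl. ring.
  - apply RI_ext with (f := fun t => Rsum (2 * m + 1) (fun l => (wt m (jl m l) * sin (IZR (jl m l) * x)) * fst (Cmul (f t) (cexp_neg (jl m l) t))
          + (wt m (jl m l) * cos (IZR (jl m l) * x)) * snd (Cmul (f t) (cexp_neg (jl m l) t)))).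
    + intros t _. unfold Fk. rewrite <- Rsum_scal.
      transitivity (Rsum (2 * m + 1) (fun l => fst (f t) * (wt m (jl m l) * sin (IZR (jl m l) * (x - t))) + snd (f t) * (wt m (jl m l) * cos (IZR (jl m l) * (x - t))))).
      apply Rsum_ext; intros l _. unfold Cmul, cexp_neg; simpl. replace (IZR (jl m l) * (x - t)) with (IZR (jl m l) * x - IZR (jl m l) * t) by ring.
      rewrite cos_minus, sin_minus. ring.
      rewrite Rsum_add, Rsum_scal, Rsum_scal, sum_sin_diff. ring.
    + eapply RI_eq. apply (RI_Rsum (2 * m + 1) (fun l t => (wt m (jl m l) * sin (IZR (jl m l) * x)) * fst (Cmul (f t) (cexp_neg (jl m l) t))
          + (wt m (jl m l) * cos (IZR (jl m l) * x)) * snd (Cmul (f t) (cexp_neg (jl m l) t)))).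
      intros l _. destruct (H (jl m l)). apply RI_plus; apply RI_scal; eauto.
      unfold tpoly. rewrite snd_Csum, <- Rsum_scal. apply Rsum_ext; intros l Hl. fold (jl m l). rewrite bF_in by auto.
      unfold Cmul, Cscale, EE; simpl. ring.
Qed.

Lemma fejer_abstract (phi : R -> R) psix x m e1 tau :
  (forall t, -PI < t < PI -> Rabs (phi t - phi x) * Fk m (x - t) <= e1 * Fk m (x - t) + tau) ->
  RI (fun t => phi t * Fk m (x - t)) (2 * PI * psix) -> Rabs (psix - phi x) <= e1 + tau.
Proof. intros Hp HR. assert (HP := PI_RGT_0).
  assert (I1 := RI_minus _ _ _ _ HR (RI_scal (phi x) _ _ (RI_Fk m x))).
  assert (I2 := RI_plus _ _ _ _ (RI_scal e1 _ _ (RI_Fk m x)) (RI_const tau)).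
  assert (U := RI_le _ _ _ _ I1 I2). assert (L := RI_le _ _ _ _ (RI_opp _ _ I2) I1).
  assert (2 * PI * psix - phi x * (2 * PI) <= e1 * (2 * PI) + 2 * PI * tau).
  { apply U. intros t Ht. specialize (Hp t Ht). assert (h := Fk_nonneg m (x - t)).
    assert ((phi t - phi x) * Fk m (x - t) <= Rabs (phi t - phi x) * Fk m (x - t)) by (apply Rmult_le_compat_r; auto; apply Rle_abs). lra. }
  assert (- (e1 * (2 * PI) + 2 * PI * tau) <= 2 * PI * psix - phi x * (2 * PI)).
  { apply L. intros t Ht. specialize (Hp t Ht). assert (h := Fk_nonneg m (x - t)).
    assert (- ((phi t - phi x) * Fk m (x - t)) <= Rabs (phi t - phi x) * Fk m (x - t)).
    { rewrite Ropp_mult_distr_l. apply Rmult_le_compat_r; auto. rewrite <- Rabs_Ropp. apply Rle_abs. } lra. }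
  apply Rabs_le. split.
  - apply Rmult_le_reg_l with (2 * PI). lra. nra.
  - apply Rmult_le_reg_l with (2 * PI). lra. nra.
Qed.

Lemma near_far x t d : -PI <= x <= PI -> -PI <= t <= PI -> 0 < d < PI -> cos d < cos (x - t) ->
  Rabs (t - x) < d \/ Rabs (t - (x - 2 * PI)) < d \/ Rabs (t - (x + 2 * PI)) < d.
Proof. intros Hx Ht Hd Hc. remember (x - t) as u.
  assert (D: forall y, 0 <= y <= PI -> cos d < cos y -> y < d).
  { intros y Hy Hcy. destruct (Rlt_or_le y d); auto. destruct (Req_dec y d). subst; lra.
    assert (cos y < cos d) by (apply cos_decreasing_1; lra). lra. }
  destruct (Rle_or_lt 0 u).
  - destruct (Rle_or_lt u PI).
    + left. assert (u < d) by (apply D; lra). rewrite Rabs_left1 by lra. lra.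
    + right; left. assert (2 * PI - u < d). { apply D. lra. replace (cos (2 * PI - u)) with (cos u); auto.
        rewrite cos_minus, cos_2PI, sin_2PI. ring. }
      rewrite Rabs_right by lra. lra.
  - destruct (Rle_or_lt (- PI) u).
    + left. assert (- u < d) by (apply D; [lra| rewrite cos_neg; auto]). rewrite Rabs_right by lra. lra.
    + right; right. assert (u + 2 * PI < d). { apply D. lra. replace (cos (u + 2 * PI)) with (cos u); auto.
        rewrite cos_plus, cos_2PI, sin_2PI. ring. }
      rewrite Rabs_left1 by lra. lra.
Qed.

Lemma fejer_pointwise (phi : R -> R) Kf e1 d m x t : 0 < d < PI -> 0 <= Kf -> 0 <= e1 ->
  (forall y, -PI <= y <= PI -> Rabs (phi y) <= Kf) ->
  (forall y z, -3 * PI <= y <= 3 * PI -> -3 * PI <= z <= 3 * PI -> Rabs (y - z) < d -> Rabs (phi y - phi z) < e1) ->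
  (forall y, phi (y + 2 * PI) = phi y) -> -PI < x < PI -> -PI < t < PI ->
  Rabs (phi t - phi x) * Fk m (x - t) <= e1 * Fk m (x - t) + 2 * Kf * (4 / ((2 - 2 * cos d) * (INR m + 1))).
Proof. intros Hd HK He Hb Hu Hper Hx Ht. assert (HP := PI_RGT_0). assert (hF := Fk_nonneg m (x - t)).
  assert (Hg: 0 < 2 - 2 * cos d). { assert (cos d < cos 0) by (apply cos_decreasing_1; lra). rewrite cos_0 in H. lra. }
  assert (Hm: 0 < INR m + 1) by (assert (h := pos_INR m); lra).
  assert (Htau: 0 <= 2 * Kf * (4 / ((2 - 2 * cos d) * (INR m + 1)))).
  { apply Rmult_le_pos. lra. apply Rdiv_le_0_compat_loc. lra. nra. }
  destruct (Rle_or_lt (cos (x - t)) (cos d)) as [Hfar|Hnear].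
  - assert (Fk m (x - t) <= 4 / ((2 - 2 * cos d) * (INR m + 1))) by (apply Fk_small; lra).
    assert (Rabs (phi t - phi x) <= 2 * Kf). { eapply Rle_trans. apply Rabs_triang. rewrite Rabs_Ropp.
      assert (h1 := Hb t ltac:(lra)). assert (h2 := Hb x ltac:(lra)). lra. }
    assert (0 <= Rabs (phi t - phi x)) by apply Rabs_pos.
    assert (0 <= e1 * Fk m (x - t)) by (apply Rmult_le_pos; auto).
    assert (Rabs (phi t - phi x) * Fk m (x - t) <= 2 * Kf * (4 / ((2 - 2 * cos d) * (INR m + 1)))).
    { apply Rmult_le_compat; auto. } lra.
  - assert (Rabs (phi t - phi x) <= e1).
    { destruct (near_far x t d ltac:(lra) ltac:(lra) Hd Hnear) as [N|[N|N]].
      - left. apply Hu; lra.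
      - replace (phi x) with (phi (x - 2 * PI)). left. apply Hu; lra.
        rewrite <- (Hper (x - 2 * PI)). f_equal. ring.
      - rewrite <- (Hper x). left. apply Hu; lra. }
    assert (Rabs (phi t - phi x) * Fk m (x - t) <= e1 * Fk m (x - t)) by (apply Rmult_le_compat_r; auto). lra.
Qed.

Lemma cont_bound (phi : R -> R) : continuity phi -> exists K, 0 <= K /\ forall y, -PI <= y <= PI -> Rabs (phi y) <= K.
Proof. intros Hc. assert (HP := PI_RGT_0).
  destruct (continuity_ab_maj phi (-PI) PI ltac:(lra) (fun c _ => Hc c)) as [M [HM _]].
  destruct (continuity_ab_maj (fun y => - phi y) (-PI) PI ltac:(lra) (fun c _ => continuity_opp _ Hc c)) as [N [HN _]].
  exists (Rabs (phi M) + Rabs (phi N)). split. assert (h1 := Rabs_pos (phi M)); assert (h2 := Rabs_pos (phi N)); lra.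
  intros y Hy. specialize (HM y Hy). specialize (HN y Hy). simpl in HN.
  assert (h1 := Rle_abs (phi M)). assert (h2 := Rabs_pos (phi N)). assert (h3 := Rle_abs (- phi N)). rewrite Rabs_Ropp in h3.
  assert (h4 := Rabs_pos (phi M)). apply Rabs_le. lra.
Qed.

Lemma unif_cont (phi : R -> R) e : continuity phi -> 0 < e -> exists d, 0 < d /\
  forall y z, -3 * PI <= y <= 3 * PI -> -3 * PI <= z <= 3 * PI -> Rabs (y - z) < d -> Rabs (phi y - phi z) < e.
Proof. intros Hc He. destruct (@Heine_cor2 phi (-3 * PI) (3 * PI) (fun c _ => Hc c) (mkposreal e He)) as [d Hd].
  exists d. split. apply cond_pos. intros; apply Hd; auto. Qed.

Lemma fejer f a : in_C2pi f -> FC f a -> forall eps, 0 < eps -> exists m, forall x, -PI < x < PI ->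
  Rabs (fst (f x) - fst (tpoly m (bF m a) x)) <= eps /\ Rabs (snd (f x) - snd (tpoly m (bF m a) x)) <= eps.
Proof. intros [Hc1 [Hc2 Hper]] HF eps Heps. unfold Cre, Cim in *. assert (HP := PI_RGT_0).
  destruct (cont_bound _ Hc1) as [K1 [HK1 HB1]]. destruct (cont_bound _ Hc2) as [K2 [HK2 HB2]].
  destruct (unif_cont _ (eps / 2) Hc1 ltac:(lra)) as [d1 [Hd1 HU1]].
  destruct (unif_cont _ (eps / 2) Hc2 ltac:(lra)) as [d2 [Hd2 HU2]].
  set (d := Rmin (Rmin d1 d2) (PI / 2)).
  assert (Hd: 0 < d < PI). { unfold d. split. apply Rmin_pos. apply Rmin_pos; auto. lra. assert (h := Rmin_r (Rmin d1 d2) (PI/2)). lra. }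
  assert (Hdd1: d <= d1) by (unfold d; eapply Rle_trans; [apply Rmin_l | apply Rmin_l]).
  assert (Hdd2: d <= d2) by (unfold d; eapply Rle_trans; [apply Rmin_l | apply Rmin_r]).
  set (Kf := K1 + K2). set (gam := 2 - 2 * cos d).
  assert (Hg: 0 < gam). { unfold gam. assert (cos d < cos 0) by (apply cos_decreasing_1; lra). rewrite cos_0 in H. lra. }
  set (m := Z.to_nat (up (16 * Kf / (gam * eps)))).
  assert (Hm: 16 * Kf / (gam * eps) <= INR m + 1).
  { unfold m. destruct (archimed (16 * Kf / (gam * eps))) as [h1 h2].
    destruct (Z_le_gt_dec 0 (up (16 * Kf / (gam * eps)))) as [Hz|Hz].
    rewrite INR_IZR_INZ, Z2Nat.id by auto. lra.
    assert (IZR (up (16 * Kf / (gam * eps))) <= 0) by (apply IZR_le; lia). assert (h := pos_INR (Z.to_nat (up (16 * Kf / (gam * eps))))). lra. }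
  assert (Hpos: 0 < INR m + 1) by (assert (h := pos_INR m); lra).
  assert (Htau: 2 * Kf * (4 / (gam * (INR m + 1))) <= eps / 2).
  { replace (2 * Kf * (4 / (gam * (INR m + 1)))) with (8 * Kf / (gam * (INR m + 1))) by (field; lra).
    apply Rmult_le_reg_r with (gam * (INR m + 1) * 2 / eps). apply Rdiv_lt_0_compat; nra.
    replace (8 * Kf / (gam * (INR m + 1)) * (gam * (INR m + 1) * 2 / eps)) with (16 * Kf / eps) by (field; lra).
    replace (eps / 2 * (gam * (INR m + 1) * 2 / eps)) with (gam * (INR m + 1)) by (field; lra).
    apply Rmult_le_reg_r with (/ gam). apply Rinv_0_lt_compat; auto.
    replace (16 * Kf / eps * / gam) with (16 * Kf / (gam * eps)) by (field; lra).
    replace (gam * (INR m + 1) * / gam) with (INR m + 1) by (field; lra). auto. }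
  exists m. intros x Hx. destruct (fejer_rep f a m x HF) as [R1 R2]. split.
  - rewrite Rabs_minus_sym. eapply Rle_trans. apply (fejer_abstract (fun y => fst (f y)) _ x m (eps / 2) (2 * Kf * (4 / (gam * (INR m + 1))))).
    intros t Ht. eapply Rle_trans. apply (fejer_pointwise (fun y => fst (f y)) Kf (eps / 2) d m x t Hd).
    unfold Kf; lra. lra. intros y Hy. specialize (HB1 y Hy). cbv beta. unfold Kf; lra.
    intros y z Hy Hz Hyz. apply HU1; auto. lra. intros y. cbv beta. rewrite Hper; auto. auto. auto.
    fold gam. lra. exact (R1). lra.
  - rewrite Rabs_minus_sym. eapply Rle_trans. apply (fejer_abstract (fun y => snd (f y)) _ x m (eps / 2) (2 * Kf * (4 / (gam * (INR m + 1))))).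
    intros t Ht. eapply Rle_trans. apply (fejer_pointwise (fun y => snd (f y)) Kf (eps / 2) d m x t Hd).
    unfold Kf; lra. lra. intros y Hy. specialize (HB2 y Hy). cbv beta. unfold Kf; lra.
    intros y z Hy Hz Hyz. apply HU2; auto. lra. intros y. cbv beta. rewrite Hper; auto. auto. auto.
    fold gam. lra. exact (R2). lra.
Qed.

Lemma Cmd_le_re_im z : Cmd z <= Rabs (fst z) + Rabs (snd z).
Proof. unfold Cmd, Cnorm2. assert (h1 := Rabs_pos (fst z)). assert (h2 := Rabs_pos (snd z)).
  rewrite <- (sqrt_square (Rabs (fst z) + Rabs (snd z))) by lra. apply sqrt_le_1_alt.
  pose proof (Rsqr_abs (fst z)) as e1. pose proof (Rsqr_abs (snd z)) as e2. unfold Rsqr in e1, e2. nra.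
Qed.

Lemma final_alg n Si S SA R E r C eta : 0 <= C -> 0 <= eta -> opnorm_le n Si C -> meq n (mmul n Si S) mid ->
  meq n (msub SA S) (madd R E) -> lr n r R -> opnorm_le n E eta ->
  exists Rb Eb, meq n (mmul n (madj (mmul n Si SA)) (mmul n Si SA)) (madd (madd mid Rb) Eb) /\
    lr n (4 * r) Rb /\ opnorm_le n Eb (C * eta + C * eta + (C * eta) * (C * eta)).
Proof. intros HC He HSi HI HD HR HE.
  set (GR := mmul n Si R). set (GE := mmul n Si E). set (G := madd GR GE).
  assert (HB: meq n (mmul n Si SA) (madd mid G)).
  { assert (SA = madd S (msub SA S)) by (extensionality i; extensionality j; unfold madd, msub, mscale; Cring).
    rewrite H, mmul_madd_r. apply meq_madd. auto. unfold G, GR, GE. rewrite <- mmul_madd_r. apply meq_mmul; auto. apply meq_refl. }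
  exists (madd (madd GR (madj GR)) (madd (mmul n (madj G) GR) (mmul n (madj GR) GE))),
         (madd (madd GE (madj GE)) (mmul n (madj GE) GE)).
  split; [|split].
  - eapply meq_trans. apply meq_mmul; [apply meq_madj; exact HB| exact HB].
    rewrite madj_madd, madj_mid, mmul_madd_l, !mmul_madd_r.
    eapply meq_trans. apply meq_madd; apply meq_madd. apply mmul_mid_l. apply mmul_mid_l. apply mmul_mid_r. apply meq_refl.
    assert (E1: mmul n (madj G) G = madd (mmul n (madj G) GR) (madd (mmul n (madj GR) GE) (mmul n (madj GE) GE))).
    { unfold G at 2. rewrite mmul_madd_r. f_equal. unfold G. rewrite madj_madd, mmul_madd_l. reflexivity. }
    rewrite E1.
    intros i j _ _. unfold G, madd, madj. Cring.
  - replace (4 * r)%nat with ((r + r) + (r + r))%nat by lia.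
    apply lr_add; apply lr_add. apply lr_mul_l; auto. apply lr_adj, lr_mul_l; auto. apply lr_mul_l, lr_mul_l; auto.
    apply lr_mul_r, lr_adj, lr_mul_l; auto.
  - assert (HGE: opnorm_le n GE (C * eta)) by (apply opnorm_mul; auto).
    assert (0 <= C * eta) by (apply Rmult_le_pos; auto).
    apply opnorm_add. apply opnorm_add. auto. apply opnorm_adj; auto. apply opnorm_mul; auto. apply opnorm_adj; auto.
Qed.

Definition key_stmt (a : Z -> Cx) : Prop := exists K, 0 <= K /\ (forall n, (0 < n)%nat -> opnorm_le n (toeplitz a) K) /\
  (forall n, (0 < n)%nat -> opnorm_le n (opt_circulant n a) K) /\
  forall eta, 0 < eta -> exists r0 N0, forall n, (N0 < n)%nat -> exists R0 E0,
     meq n (msub (toeplitz a) (opt_circulant n a)) (madd R0 E0) /\ lr n r0 R0 /\ opnorm_le n E0 eta.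

Lemma main_from_key (a : Z -> Cx) (sinA sinc sincinv : nat -> Mat) (Cst : R) : key_stmt a ->
  (forall n : nat, (0 < n)%nat -> is_msin n (toeplitz a) (sinA n)) ->
  (forall n : nat, (0 < n)%nat -> is_msin n (opt_circulant n a) (sinc n)) ->
  (forall n : nat, (0 < n)%nat -> is_inverse n (sinc n) (sincinv n)) ->
  (forall n : nat, (0 < n)%nat -> opnorm_le n (sincinv n) Cst) ->
  forall eps : R, 0 < eps ->
  exists N M : nat, (0 < N)%nat /\ (0 < M)%nat /\
    forall n : nat, (N < n)%nat ->
      exists Rb Eb : Mat,
        meq n
          (mmul n (madj (mmul n (sincinv n) (sinA n))) (mmul n (sincinv n) (sinA n)))
          (madd (madd mid Rb) Eb) /\
        rank_le n Rb (4 * M) /\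
        opnorm_le n Eb eps.
Proof. intros [K [HK [HT [HC Hkey]]]] HsA Hsc Hinv Hnorm eps Heps.
  set (C := Rabs Cst). assert (HC0: 0 <= C) by apply Rabs_pos.
  set (eta := Rmin 1 (eps / (2 * C + C * C + 1))).
  assert (Heta: 0 < eta). { unfold eta. apply Rmin_pos. lra. apply Rdiv_lt_0_compat; nra. }
  assert (Heta1: eta <= 1) by apply Rmin_l.
  assert (Heta2: eta <= eps / (2 * C + C * C + 1)) by apply Rmin_r.
  destruct (sin_decomp K eta HK Heta) as [q [e0 [He0 Hsd]]].
  destruct (Hkey e0 He0) as [r0 [N0 HN0]].
  exists (S N0), (S (q * r0)). split. lia. split. lia.
  intros n Hn. assert (Hn0: (0 < n)%nat) by lia.
  destruct (HN0 n ltac:(lia)) as [R0 [E0 [H1 [H2 H3]]]].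
  destruct (Hsd n r0 (toeplitz a) (opt_circulant n a) (sinA n) (sinc n) R0 E0 (HT n Hn0) (HC n Hn0) (HsA n Hn0) (Hsc n Hn0) H1 H2 H3)
    as [R [E [G1 [G2 G3]]]].
  destruct (final_alg n (sincinv n) (sinc n) (sinA n) R E (q * r0) C eta HC0 (Rlt_le _ _ Heta) (opnorm_abs _ _ _ (Hnorm n Hn0)) (proj2 (Hinv n Hn0)) G1 G2 G3)
    as [Rb [Eb [F1 [F2 F3]]]].
  exists Rb, Eb. split; [auto|split].
  - apply lr_rank. eapply lr_mono. 2: exact F2. lia.
  - eapply opnorm_mono. 2: exact F3.
    assert (C * eta * (C * eta) <= C * C * eta). { assert (0 <= C * C) by nra. nra. }
    assert ((2 * C + C * C) * eta <= eps). { apply Rle_trans with ((2 * C + C * C + 1) * eta). nra.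
      apply Rmult_le_reg_r with (/ (2 * C + C * C + 1)). apply Rinv_0_lt_compat; nra.
      replace ((2 * C + C * C + 1) * eta * / (2 * C + C * C + 1)) with eta by (field; nra). unfold Rdiv in Heta2.
      replace (eps * / (2 * C + C * C + 1)) with (eps / (2 * C + C * C + 1)) by auto. lra. }
    nra.
Qed.

Lemma mod_lt2 a n : (n <= a < 2 * n)%nat -> (a mod n = a - n)%nat.
Proof. intros H. replace a with ((a - n) + 1 * n)%nat at 1 by lia. rewrite Nat.Div0.mod_add. apply Nat.mod_small. lia. Qed.

Lemma mod_lt3 a n : (2 * n <= a < 3 * n)%nat -> (a mod n = a - 2 * n)%nat.
Proof. intros H. replace a with ((a - 2 * n) + 2 * n)%nat at 1 by lia. rewrite Nat.Div0.mod_add. apply Nat.mod_small. lia. Qed.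

Lemma rot1 n (G : nat -> Cx) : Csum n (fun j => G ((j + 1) mod n)%nat) = Csum n G.
Proof. destruct n. reflexivity.
  transitivity (Cadd (Csum n (fun j => G ((j + 1) mod S n)%nat)) (G ((n + 1) mod S n)%nat)). reflexivity.
  rewrite Csum_first.
  rewrite (Csum_ext n _ (fun l => G (S l))). replace ((n + 1) mod S n)%nat with O. Cring.
  rewrite Nat.add_1_r. symmetry. apply Nat.Div0.mod_same.
  intros l Hl. rewrite Nat.mod_small by lia. f_equal; lia. Qed.

Lemma rot n (F : nat -> Cx) s : (0 < n)%nat -> Csum n (fun j => F ((j + s) mod n)%nat) = Csum n F.
Proof. intros Hn. induction s.
  - apply Csum_ext; intros. rewrite Nat.add_0_r, Nat.mod_small; auto.
  - rewrite <- IHs. rewrite <- (rot1 n (fun j => F ((j + s) mod n)%nat)). apply Csum_ext; intros j Hj. f_equal.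
    rewrite Nat.Div0.add_mod_idemp_l. f_equal. lia. Qed.

Lemma inv_shift n s j : (j < n)%nat -> (s <= n)%nat -> (((j + s) mod n + (n - s)) mod n = j)%nat.
Proof. intros Hj Hs. rewrite Nat.Div0.add_mod_idemp_l. replace (j + s + (n - s))%nat with (j + 1 * n)%nat by lia.
  rewrite Nat.Div0.mod_add. apply Nat.mod_small; auto. Qed.

Lemma Csum_const m x : Csum m (fun _ => x) = Cscale (INR m) x.
Proof. induction m; simpl Csum. Cring. rewrite IHm, S_INR. Cring. Qed.

Lemma circ_avg n c j k : (j < n)%nat -> (k < n)%nat ->
  Csum n (fun s => c (Z.of_nat ((j + s) mod n) - Z.of_nat ((k + s) mod n))%Z) = Cscale (INR n) (opt_circulant n c j k).
Proof. intros Hj Hk. assert (Hn: (0 < n)%nat) by lia.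
  transitivity (Csum n (fun p => c (Z.of_nat ((p + (j + n - k)) mod n) - Z.of_nat p)%Z)).
  { rewrite <- (rot n (fun p => c (Z.of_nat ((p + (j + n - k)) mod n) - Z.of_nat p)%Z) k Hn).
    apply Csum_ext; intros s Hs. cbv beta. f_equal. f_equal.
    - f_equal. rewrite Nat.Div0.add_mod_idemp_l. replace (s + k + (j + n - k))%nat with ((j + s) + 1 * n)%nat by lia.
      rewrite Nat.Div0.mod_add. auto.
    - f_equal. f_equal. lia. }
  unfold opt_circulant, circ_coeff.
  destruct (le_lt_dec k j) as [Hkj|Hkj].
  - set (d := (j - k)%nat).
    replace (Z.to_nat ((Z.of_nat j - Z.of_nat k) mod Z.of_nat n)) with d
      by (unfold d; rewrite Z.mod_small by lia; lia).
    replace n with ((n - d) + d)%nat at 1 by lia. rewrite Csum_split.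
    assert (A1: Csum (n - d) (fun p => c (Z.of_nat ((p + (j + n - k)) mod n) - Z.of_nat p)%Z) = Csum (n - d) (fun _ => c (Z.of_nat d))).
    { apply Csum_ext. intros p Hp. f_equal. rewrite mod_lt2 by lia. unfold d. lia. }
    assert (A2: Csum d (fun q => c (Z.of_nat ((n - d + q + (j + n - k)) mod n) - Z.of_nat (n - d + q))%Z) = Csum d (fun _ => c (Z.of_nat d - Z.of_nat n)%Z)).
    { apply Csum_ext. intros q Hq. f_equal. rewrite mod_lt3 by lia. unfold d. lia. }
    rewrite A1, A2, !Csum_const. replace (INR (n - d)) with (INR n - INR d) by (rewrite minus_INR; auto; lia).
    assert (INR n <> 0) by (apply not_0_INR; lia). unfold Cscale, Cadd. apply injective_projections; simpl; field; auto.
  - set (d := (k - j)%nat).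
    replace (Z.to_nat ((Z.of_nat j - Z.of_nat k) mod Z.of_nat n)) with (n - d)%nat.
    2: { replace (Z.of_nat j - Z.of_nat k)%Z with (Z.of_nat (n - d) + (-1) * Z.of_nat n)%Z by (unfold d; lia).
         rewrite Z.mod_add by lia. rewrite Z.mod_small by lia. lia. }
    replace n with (d + (n - d))%nat at 1 by lia. rewrite Csum_split.
    assert (A1: Csum d (fun p => c (Z.of_nat ((p + (j + n - k)) mod n) - Z.of_nat p)%Z) = Csum d (fun _ => c (Z.of_nat (n - d)))).
    { apply Csum_ext. intros p Hp. f_equal. rewrite Nat.mod_small by lia. unfold d. lia. }
    assert (A2: Csum (n - d) (fun q => c (Z.of_nat ((d + q + (j + n - k)) mod n) - Z.of_nat (d + q))%Z) = Csum (n - d) (fun _ => c (Z.of_nat (n - d) - Z.of_nat n)%Z)).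
    { apply Csum_ext. intros q Hq. f_equal. rewrite mod_lt2 by lia. unfold d. lia. }
    rewrite A1, A2, !Csum_const. replace (INR (n - d)) with (INR n - INR d) by (rewrite minus_INR; auto; lia).
    assert (INR n <> 0) by (apply not_0_INR; lia). unfold Cscale, Cadd. apply injective_projections; simpl; field; auto.
Qed.

Definition sh (n s : nat) (u : Vec) : Vec := fun i => u ((i + (n - s)) mod n)%nat.

Lemma nsq_sh n s u : (0 < n)%nat -> nsq n (sh n s u) = nsq n u.
Proof. intros Hn. rewrite <- !fst_ip_self. unfold ip, sh. f_equal.
  apply (rot n (fun i => Cmul (Cconj (u i)) (u i)) (n - s) Hn). Qed.

Lemma ip_sh n s w (T : Mat) v : (0 < n)%nat -> (s < n)%nat ->
  ip n (sh n s w) (mvmul n T (sh n s v)) =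
  Csum n (fun j => Cmul (Cconj (w j)) (Csum n (fun k => Cmul (T ((j + s) mod n)%nat ((k + s) mod n)%nat) (v k)))).
Proof. intros Hn Hs. unfold ip, mvmul.
  rewrite <- (rot n (fun j' => Cmul (Cconj (sh n s w j')) (Csum n (fun k' => Cmul (T j' k') (sh n s v k')))) s Hn).
  apply Csum_ext; intros j Hj. cbv beta. unfold sh at 1. rewrite inv_shift by lia. f_equal.
  rewrite <- (rot n (fun k' => Cmul (T ((j + s) mod n)%nat k') (sh n s v k')) s Hn).
  apply Csum_ext; intros k Hk. unfold sh. rewrite inv_shift by lia. auto. Qed.

Lemma circ_ip n c w v : (0 < n)%nat ->
  Cscale (INR n) (ip n w (mvmul n (opt_circulant n c) v)) = Csum n (fun s => ip n (sh n s w) (mvmul n (toeplitz c) (sh n s v))).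
Proof. intros Hn. rewrite (Csum_ext n _ (fun s => Csum n (fun j => Cmul (Cconj (w j)) (Csum n (fun k => Cmul (toeplitz c ((j + s) mod n)%nat ((k + s) mod n)%nat) (v k)))))).
  2: { intros s Hs. apply ip_sh; auto. }
  rewrite Csum_swap. unfold ip. rewrite <- Csum_scale. apply Csum_ext; intros j Hj.
  rewrite Csum_mul_l. transitivity (Cmul (Cconj (w j)) (Cscale (INR n) (mvmul n (opt_circulant n c) v j))). Cring. f_equal.
  unfold mvmul. rewrite <- Csum_scale. rewrite Csum_swap. apply Csum_ext; intros k Hk.
  rewrite Csum_mul_r. unfold toeplitz. rewrite circ_avg by auto. Cring. Qed.

Lemma Rsum_const m x : Rsum m (fun _ => x) = INR m * x.
Proof. induction m; simpl Rsum. simpl; ring. rewrite IHm, S_INR. ring. Qed.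

Lemma circ_bound n c K : (0 < n)%nat -> 0 <= K -> opnorm_le n (toeplitz c) K -> opnorm_le n (opt_circulant n c) K.
Proof. intros Hn HK HT. apply bil_opnorm; auto. intros v w lam Hl. apply opnorm_bil in HT; auto.
  assert (E := f_equal fst (circ_ip n c w v Hn)). rewrite fst_Csum in E. unfold Cscale in E; simpl in E.
  assert (Hn': 0 < INR n) by (apply lt_0_INR; auto).
  apply Rmult_le_reg_l with (INR n); auto. rewrite E.
  replace (INR n * (K / 2 * (lam * nsq n w + nsq n v / lam))) with (Rsum n (fun s => K / 2 * (lam * nsq n (sh n s w) + nsq n (sh n s v) / lam))).
  apply Rsum_le; intros s Hs. apply HT; auto.
  rewrite (Rsum_ext n _ (fun _ => K / 2 * (lam * nsq n w + nsq n v / lam))). 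
  apply Rsum_const.
  intros s Hs. rewrite !nsq_sh; auto. Qed.

Definition ind (m i j : nat) : R := if andb (Nat.leb j (i + m)) (Nat.leb i (j + m)) then 1 else 0.

Lemma count n lo hi : Rsum n (fun j => if andb (Nat.leb lo j) (Nat.ltb j hi) then 1 else 0) = INR (Nat.min n hi - lo).
Proof. induction n. simpl. auto. cbn [Rsum]. rewrite IHn.
  destruct (le_lt_dec lo n) as [E1|E1]; destruct (lt_dec n hi) as [E2|E2].
  - replace (andb (Nat.leb lo n) (Nat.ltb n hi)) with true by (symmetry; apply andb_true_intro; split; [apply Nat.leb_le|apply Nat.ltb_lt]; lia).
    replace (Nat.min (S n) hi - lo)%nat with (S (Nat.min n hi - lo)) by lia. rewrite S_INR. ring.
  - replace (andb (Nat.leb lo n) (Nat.ltb n hi)) with false. 2: { symmetry. apply Bool.andb_false_iff. right. apply Nat.ltb_ge. lia. }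
    replace (Nat.min (S n) hi - lo)%nat with (Nat.min n hi - lo)%nat by lia. ring.
  - replace (andb (Nat.leb lo n) (Nat.ltb n hi)) with false. 2: { symmetry. apply Bool.andb_false_iff. left. apply Nat.leb_gt. lia. }
    replace (Nat.min (S n) hi - lo)%nat with (Nat.min n hi - lo)%nat by lia. ring.
  - replace (andb (Nat.leb lo n) (Nat.ltb n hi)) with false. 2: { symmetry. apply Bool.andb_false_iff. left. apply Nat.leb_gt. lia. }
    replace (Nat.min (S n) hi - lo)%nat with (Nat.min n hi - lo)%nat by lia. ring.
Qed.

Lemma count_ind n m i : Rsum n (fun j => ind m i j) <= INR (2 * m + 1).
Proof. rewrite (Rsum_ext n _ (fun j => if andb (Nat.leb (i - m) j) (Nat.ltb j (i + m + 1)) then 1 else 0)).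
  rewrite count. apply le_INR. lia.
  intros j _. unfold ind. destruct (Nat.leb j (i + m)) eqn:E1; destruct (Nat.leb i (j + m)) eqn:E2;
  destruct (Nat.leb (i - m) j) eqn:E3; destruct (Nat.ltb j (i + m + 1)) eqn:E4; simpl; auto;
  repeat match goal with H : Nat.leb _ _ = true |- _ => apply Nat.leb_le in H | H : Nat.leb _ _ = false |- _ => apply Nat.leb_gt in H
   | H : Nat.ltb _ _ = true |- _ => apply Nat.ltb_lt in H | H : Nat.ltb _ _ = false |- _ => apply Nat.ltb_ge in H end; lia.
Qed.

Lemma ind_sym m i j : ind m i j = ind m j i.
Proof. unfold ind. rewrite Bool.andb_comm. auto. Qed.

Lemma Cx_eq_dec_loc (z : Cx) : {z = C0} + {z <> C0}.
Proof. destruct z as [x y]. destruct (Req_EM_T x 0); destruct (Req_EM_T y 0); subst; [left; reflexivity| right; intros H; inversion H; auto..]. Qed.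

Lemma schur n X m gam : 0 <= gam -> (forall i j, (i < n)%nat -> (j < n)%nat -> Cmd (X i j) <= gam) ->
  (forall i j, (i < n)%nat -> (j < n)%nat -> X i j <> C0 -> (j <= i + m /\ i <= j + m)%nat) ->
  opnorm_le n X (INR (2 * m + 1) * gam).
Proof. intros Hg Hb Hs. apply bil_opnorm. apply Rmult_le_pos; auto. apply pos_INR.
  intros v w lam Hl. unfold ip, mvmul. rewrite fst_Csum.
  assert (Hi: forall i j, (i < n)%nat -> (j < n)%nat -> fst (Cmul (Cconj (w i)) (Cmul (X i j) (v j))) <=
      ind m i j * (gam / 2) * (lam * Cnorm2 (w i) + Cnorm2 (v j) / lam)).
  { intros i j Hi Hj. assert (hw := Cmd_nonneg (w i)). assert (hv := Cmd_nonneg (v j)).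
    destruct (Cx_eq_dec_loc (X i j)) as [E|E].
    - rewrite E. unfold Cmul, Cconj, C0; simpl. assert (0 <= ind m i j) by (unfold ind; destruct (andb _ _); lra).
      assert (0 <= Cnorm2 (w i)) by apply Cnorm2_nonneg. assert (0 <= Cnorm2 (v j)) by apply Cnorm2_nonneg.
      assert (0 <= Cnorm2 (v j) / lam) by (apply Rdiv_le_0_compat_loc; lra).
      replace (fst (w i) * (0 * fst (v j) - 0 * snd (v j)) - - snd (w i) * (0 * snd (v j) + 0 * fst (v j))) with 0 by ring.
      apply Rmult_le_pos. apply Rmult_le_pos; lra. nra.
    - destruct (Hs i j Hi Hj E). unfold ind. replace (andb (Nat.leb j (i + m)) (Nat.leb i (j + m))) with true.
      2: { symmetry. apply andb_true_intro. split; apply Nat.leb_le; auto. }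
      eapply Rle_trans. apply Cre_le_Cmd. rewrite !Cmd_mul, Cmd_conj.
      assert (h := Hb i j Hi Hj). assert (hx := Cmd_nonneg (X i j)).
      assert (Cmd (w i) * (Cmd (X i j) * Cmd (v j)) <= gam * (Cmd (w i) * Cmd (v j))).
      { replace (Cmd (w i) * (Cmd (X i j) * Cmd (v j))) with (Cmd (X i j) * (Cmd (w i) * Cmd (v j))) by ring.
        apply Rmult_le_compat_r; auto. nra. }
      assert (h2 := amgm (Cmd (w i)) (Cmd (v j)) lam Hl). rewrite !Cmd_sq in h2.
      assert (gam * (Cmd (w i) * Cmd (v j)) <= gam * ((lam * Cnorm2 (w i) + Cnorm2 (v j) / lam) / 2)) by (apply Rmult_le_compat_l; auto).
      replace (1 * (gam / 2) * (lam * Cnorm2 (w i) + Cnorm2 (v j) / lam)) with (gam * ((lam * Cnorm2 (w i) + Cnorm2 (v j) / lam) / 2)) by (field; lra).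
      lra. }
  eapply Rle_trans. apply Rsum_le. intros i Hi'. rewrite <- Csum_mul_l, fst_Csum. apply Rsum_le. intros j Hj'. apply (Hi i j Hi' Hj').
  rewrite (Rsum_ext n _ (fun i => (gam / 2 * lam) * (Cnorm2 (w i) * Rsum n (fun j => ind m i j)) + (gam / 2 / lam) * Rsum n (fun j => ind m i j * Cnorm2 (v j)))).
  2: { intros i _. rewrite <- Rsum_scal, <- Rsum_scal, <- Rsum_scal, <- Rsum_add. apply Rsum_ext; intros; field; lra. }
  rewrite Rsum_add, !Rsum_scal, Rsum_swap.
  rewrite (Rsum_ext n (fun j => Rsum n (fun i => ind m i j * Cnorm2 (v j))) (fun j => Cnorm2 (v j) * Rsum n (fun i => ind m j i))).
  2: { intros j _. rewrite <- Rsum_scal. apply Rsum_ext; intros. rewrite ind_sym. ring. }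
  assert (A: forall u : Vec, Rsum n (fun i => Cnorm2 (u i) * Rsum n (fun j => ind m i j)) <= INR (2 * m + 1) * nsq n u).
  { intros u. unfold nsq. rewrite <- Rsum_scal. apply Rsum_le; intros i _. rewrite Rmult_comm. apply Rmult_le_compat_r. apply Cnorm2_nonneg. apply count_ind. }
  assert (A1 := A w). assert (A2 := A v).
  assert (0 <= gam / 2 * lam) by (apply Rmult_le_pos; lra). assert (0 <= gam / 2 / lam) by (apply Rdiv_le_0_compat_loc; lra).
  replace (INR (2 * m + 1) * gam / 2 * (lam * nsq n w + nsq n v / lam)) with ((gam / 2 * lam) * (INR (2 * m + 1) * nsq n w) + (gam / 2 / lam) * (INR (2 * m + 1) * nsq n v)) by (field; lra).
  apply Rplus_le_compat; apply Rmult_le_compat_l; auto.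
Qed.

Definition Band (n : nat) (b : Z -> Cx) : Mat := fun i j =>
  Cscale (IZR (Z.abs (Z.of_nat i - Z.of_nat j)) / INR n) (b (Z.of_nat i - Z.of_nat j)%Z).
Definition Corner (n : nat) (b : Z -> Cx) : Mat := msub (msub (toeplitz b) (opt_circulant n b)) (Band n b).

Lemma corner_zero n m b : (forall j, (Z.of_nat m < Z.abs j)%Z -> b j = C0) -> (2 * m < n)%nat ->
  forall i j, (i < n)%nat -> (j < n)%nat -> (m <= i < n - m)%nat -> Corner n b i j = C0.
Proof. intros Hb Hn i j Hi Hj Hm. assert (Hn0: INR n <> 0) by (apply not_0_INR; lia).
  unfold Corner, msub, madd, mscale, Band, toeplitz, opt_circulant, circ_coeff.
  destruct (le_lt_dec j i) as [Hji|Hji].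
  - set (d := (i - j)%nat).
    replace (Z.to_nat ((Z.of_nat i - Z.of_nat j) mod Z.of_nat n)) with d by (unfold d; rewrite Z.mod_small by lia; lia).
    replace (Z.of_nat i - Z.of_nat j)%Z with (Z.of_nat d) by (unfold d; lia).
    rewrite (Hb (Z.of_nat d - Z.of_nat n)%Z) by (unfold d; lia). rewrite Z.abs_eq by lia. rewrite <- INR_IZR_INZ.
    unfold Cscale, Cadd, Cmul, RtoC, C0; apply injective_projections; simpl; field; auto.
  - set (d := (j - i)%nat).
    replace (Z.to_nat ((Z.of_nat i - Z.of_nat j) mod Z.of_nat n)) with (n - d)%nat.
    2: { replace (Z.of_nat i - Z.of_nat j)%Z with (Z.of_nat (n - d) + (-1) * Z.of_nat n)%Z by (unfold d; lia).
         rewrite Z.mod_add by lia. rewrite Z.mod_small by lia. lia. }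
    rewrite (Hb (Z.of_nat (n - d))) by (unfold d; lia).
    replace (Z.of_nat (n - d) - Z.of_nat n)%Z with (Z.of_nat i - Z.of_nat j)%Z by (unfold d; lia).
    replace (IZR (Z.abs (Z.of_nat i - Z.of_nat j))) with (INR d) by (rewrite INR_IZR_INZ; f_equal; unfold d; lia).
    rewrite minus_INR by (unfold d; lia).
    unfold Cscale, Cadd, Cmul, RtoC, C0; apply injective_projections; simpl; field; auto.
Qed.

Definition rowidx (n m l : nat) : nat := if Nat.ltb l m then l else (n - 2 * m + l)%nat.

Lemma rows_lr n m X : (2 * m <= n)%nat -> (forall i j, (i < n)%nat -> (j < n)%nat -> (m <= i < n - m)%nat -> X i j = C0) ->
  lr n (2 * m) X.
Proof. intros Hn HX. exists (fun l i => if Nat.eqb i (rowidx n m l) then C1 else C0), (fun l j => Cconj (X (rowidx n m l) j)).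
  intros i j Hi Hj.
  destruct (lt_dec i m) as [H1|H1]; [|destruct (le_lt_dec (n - m) i) as [H2|H2]].
  - rewrite <- (Csum_delta (2 * m) i (X i j)) by lia. apply Csum_ext; intros l Hl. unfold rowidx.
    destruct (Nat.ltb l m) eqn:E. apply Nat.ltb_lt in E.
    destruct (Nat.eqb i l) eqn:E2; destruct (Nat.eqb l i) eqn:E3; try (apply Nat.eqb_eq in E2); try (apply Nat.eqb_eq in E3); subst; try Cring;
      try (apply Nat.eqb_neq in E2); try (apply Nat.eqb_neq in E3); lia.
    apply Nat.ltb_ge in E. destruct (Nat.eqb i (n - 2 * m + l)) eqn:E2. apply Nat.eqb_eq in E2; lia.
    destruct (Nat.eqb l i) eqn:E3. apply Nat.eqb_eq in E3; lia. Cring.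
  - rewrite <- (Csum_delta (2 * m) (i - (n - 2 * m)) (X i j)) by lia. apply Csum_ext; intros l Hl. unfold rowidx.
    destruct (Nat.ltb l m) eqn:E. apply Nat.ltb_lt in E.
    destruct (Nat.eqb i l) eqn:E2. apply Nat.eqb_eq in E2; lia. destruct (Nat.eqb l (i - (n - 2 * m))) eqn:E3. apply Nat.eqb_eq in E3; lia. Cring.
    apply Nat.ltb_ge in E. destruct (Nat.eq_dec l (i - (n - 2 * m))) as [E3|E3].
    + replace (Nat.eqb i (n - 2 * m + l)) with true by (symmetry; apply Nat.eqb_eq; lia).
      replace (Nat.eqb l (i - (n - 2 * m))) with true by (symmetry; apply Nat.eqb_eq; lia).
      replace (n - 2 * m + l)%nat with i by lia. Cring.
    + replace (Nat.eqb i (n - 2 * m + l)) with false by (symmetry; apply Nat.eqb_neq; lia).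
      replace (Nat.eqb l (i - (n - 2 * m))) with false by (symmetry; apply Nat.eqb_neq; lia). Cring.
  - rewrite HX by lia. symmetry. rewrite (Csum_ext (2 * m) _ (fun _ => C0)). apply Csum_zero. intros l Hl. unfold rowidx.
    destruct (Nat.ltb l m) eqn:E. apply Nat.ltb_lt in E.
    destruct (Nat.eqb i l) eqn:E2. apply Nat.eqb_eq in E2; lia. Cring.
    apply Nat.ltb_ge in E. destruct (Nat.eqb i (n - 2 * m + l)) eqn:E2. apply Nat.eqb_eq in E2; lia. Cring.
Qed.

Lemma band_bound n m b beta : (0 < n)%nat -> 0 <= beta -> (forall j, (Z.of_nat m < Z.abs j)%Z -> b j = C0) -> (forall d, Cmd (b d) <= beta) ->
  opnorm_le n (Band n b) (INR (2 * m + 1) * (INR m / INR n * beta)).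
Proof. intros Hn Hbeta Hb Hbd. assert (Hn': 0 < INR n) by (apply lt_0_INR; auto).
  apply schur. apply Rmult_le_pos. apply Rdiv_le_0_compat_loc; auto. apply pos_INR. auto.
  - intros i j Hi Hj. unfold Band. set (d := (Z.of_nat i - Z.of_nat j)%Z).
    destruct (Z_le_gt_dec (Z.abs d) (Z.of_nat m)) as [Hd|Hd].
    + replace (Cscale (IZR (Z.abs d) / INR n) (b d)) with (Cmul (RtoC (IZR (Z.abs d) / INR n)) (b d)) by Cring.
      rewrite Cmd_mul. unfold Cmd at 1, Cnorm2, RtoC; simpl. rewrite Rmult_0_l, Rplus_0_r, sqrt_square.
      2: { apply Rdiv_le_0_compat_loc; auto. apply IZR_le; lia. }
      apply Rmult_le_compat. apply Rdiv_le_0_compat_loc; auto. apply IZR_le; lia. apply Cmd_nonneg.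
      unfold Rdiv. apply Rmult_le_compat_r. left; apply Rinv_0_lt_compat; auto. rewrite INR_IZR_INZ. apply IZR_le. lia.
      auto.
    + rewrite Hb by lia. unfold Cmd, Cnorm2, Cscale, C0; simpl. replace (IZR (Z.abs d) / INR n * 0 * (IZR (Z.abs d) / INR n * 0) + IZR (Z.abs d) / INR n * 0 * (IZR (Z.abs d) / INR n * 0)) with 0 by ring.
      rewrite sqrt_0. apply Rmult_le_pos. apply Rdiv_le_0_compat_loc; auto. apply pos_INR. auto.
  - intros i j Hi Hj Hne. unfold Band in Hne. destruct (Z_le_gt_dec (Z.abs (Z.of_nat i - Z.of_nat j)) (Z.of_nat m)) as [Hd|Hd].
    lia. exfalso. apply Hne. rewrite Hb by lia. Cring.
Qed.

Lemma single_le_Rsum N (F : nat -> R) l0 : (l0 < N)%nat -> (forall l, 0 <= F l) -> F l0 <= Rsum N F.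
Proof. induction N; intros Hl HF. lia. cbn [Rsum]. destruct (Nat.eq_dec l0 N). subst.
  assert (0 <= Rsum N F) by (apply Rsum_nonneg; auto). lra. assert (F l0 <= Rsum N F) by (apply IHN; auto; lia).
  assert (h := HF N). lra. Qed.

Lemma beta_bound m (b : Z -> Cx) : (forall j, (Z.of_nat m < Z.abs j)%Z -> b j = C0) ->
  forall d, Cmd (b d) <= Rsum (2 * m + 1) (fun l => Cmd (b (Z.of_nat l - Z.of_nat m)%Z)).
Proof. intros Hb d. destruct (Z_le_gt_dec (Z.abs d) (Z.of_nat m)) as [Hd|Hd].
  - replace d with (Z.of_nat (Z.to_nat (d + Z.of_nat m)) - Z.of_nat m)%Z at 1 by lia.
    apply (single_le_Rsum (2 * m + 1) (fun l => Cmd (b (Z.of_nat l - Z.of_nat m)%Z))). lia. intros; apply Cmd_nonneg.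
  - rewrite Hb by lia. unfold Cmd, Cnorm2, C0; simpl. replace (0 * 0 + 0 * 0) with 0 by ring. rewrite sqrt_0.
    apply Rsum_nonneg. intros; apply Cmd_nonneg.
Qed.

Lemma circ_lin n a b k : circ_coeff n (fun j => Cadd (a j) (Cmul (RtoC (-1)) (b j))) k =
  Cadd (circ_coeff n a k) (Cmul (RtoC (-1)) (circ_coeff n b k)).
Proof. unfold circ_coeff. Cring. Qed.

Lemma key f a : in_C2pi f -> (forall k, is_fourier_coeff f k (a k)) -> key_stmt a.
Proof. intros Hf Hfc. assert (HF := FC_of_fourier f a Hfc). assert (HP := PI_RGT_0).
  destruct Hf as [Hc1 [Hc2 Hper]].
  destruct (cont_bound _ Hc1) as [K1 [HK1 HB1]]. destruct (cont_bound _ Hc2) as [K2 [HK2 HB2]].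
  assert (HfK: forall t, -PI < t < PI -> Cmd (f t) <= K1 + K2).
  { intros t Ht. eapply Rle_trans. apply Cmd_le_re_im. specialize (HB1 t ltac:(lra)). specialize (HB2 t ltac:(lra)).
    unfold Cre, Cim in *. lra. }
  assert (HT: forall n, opnorm_le n (toeplitz a) (K1 + K2)) by (intros; apply (toeplitz_bound f); auto; lra).
  exists (K1 + K2). split. lra. split. intros; apply HT. split. intros n Hn. apply circ_bound; auto. lra.
  intros eta Heta.
  destruct (fejer f a (conj Hc1 (conj Hc2 Hper)) HF (eta / 8) ltac:(lra)) as [m Hm].
  set (b := bF m a). assert (Hbs: forall j, (Z.of_nat m < Z.abs j)%Z -> b j = C0) by (intros; apply bF_supp; auto).
  set (p := tpoly m b). assert (FCp := FC_tpoly m b Hbs).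
  set (c := fun k => Cadd (a k) (Cmul (RtoC (-1)) (b k))).
  assert (FCh := FC_add _ _ _ _ HF (FC_scale _ _ (RtoC (-1)) FCp)).
  assert (Hh: forall t, -PI < t < PI -> Cmd (Cadd (f t) (Cmul (RtoC (-1)) (tpoly m b t))) <= eta / 4).
  { intros t Ht. eapply Rle_trans. apply Cmd_le_re_im. destruct (Hm t Ht) as [A1 A2]. fold b in A1, A2.
    unfold Cadd, Cmul, RtoC; simpl. replace (fst (f t) + (-1 * fst (tpoly m b t) - 0 * snd (tpoly m b t))) with (fst (f t) - fst (tpoly m b t)) by ring.
    replace (snd (f t) + (-1 * snd (tpoly m b t) + 0 * fst (tpoly m b t))) with (snd (f t) - snd (tpoly m b t)) by ring. lra. }
  assert (Th: forall n, opnorm_le n (toeplitz c) (eta / 4)) by (intros; apply (toeplitz_bound _ _ _ n FCh); auto; lra).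
  set (beta := Rsum (2 * m + 1) (fun l => Cmd (b (Z.of_nat l - Z.of_nat m)%Z))).
  assert (Hbeta: 0 <= beta) by (apply Rsum_nonneg; intros; apply Cmd_nonneg).
  assert (Hbd := beta_bound m b Hbs). fold beta in Hbd.
  set (A := INR (2 * m + 1) * INR m * beta).
  assert (HA: 0 <= A) by (unfold A; apply Rmult_le_pos; [apply Rmult_le_pos; apply pos_INR| auto]).
  exists (2 * m)%nat, (Z.to_nat (up (2 * A / eta)) + 2 * m)%nat.
  intros n Hn. assert (Hn0: (0 < n)%nat) by lia. assert (Hn': 0 < INR n) by (apply lt_0_INR; lia).
  assert (HnA: 2 * A / eta <= INR n).
  { destruct (archimed (2 * A / eta)) as [h1 h2]. destruct (Z_le_gt_dec 0 (up (2 * A / eta))) as [Hz|Hz].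
    - assert (INR (Z.to_nat (up (2 * A / eta))) <= INR n) by (apply le_INR; lia).
      rewrite INR_IZR_INZ, Z2Nat.id in H by auto. lra.
    - assert (IZR (up (2 * A / eta)) <= 0) by (apply IZR_le; lia). lra. }
  exists (Corner n b), (madd (Band n b) (msub (toeplitz c) (opt_circulant n c))).
  split; [|split].
  - intros i j Hi Hj. unfold Corner, msub, madd, mscale, opt_circulant. unfold c at 2. rewrite circ_lin.
    unfold toeplitz, c. Cring.
  - apply rows_lr. lia. intros i j Hi Hj Him. apply (corner_zero n m b Hbs); auto. lia.
  - apply opnorm_mono with (eta / 2 + (eta / 4 + eta / 4)). lra. apply opnorm_add.
    + eapply opnorm_mono. 2: apply (band_bound n m b beta Hn0 Hbeta Hbs Hbd).
      replace (INR (2 * m + 1) * (INR m / INR n * beta)) with (A / INR n) by (unfold A; field; lra).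
      apply Rmult_le_reg_r with (INR n * 2 / eta). apply Rdiv_lt_0_compat; lra.
      replace (A / INR n * (INR n * 2 / eta)) with (2 * A / eta) by (field; lra).
      replace (eta / 2 * (INR n * 2 / eta)) with (INR n) by (field; lra). auto.
    + apply opnorm_msub. apply Th. apply circ_bound; auto. lra.
Qed.

Theorem mainTheorem8
  (f : R -> Cx) (a : Z -> Cx)
  (sinA sinc sincinv : nat -> Mat) (Cst : R) :
  in_C2pi f ->
  (forall k : Z, is_fourier_coeff f k (a k)) ->
  (forall n : nat, (0 < n)%nat -> is_msin n (toeplitz a) (sinA n)) ->
  (forall n : nat, (0 < n)%nat -> is_msin n (opt_circulant n a) (sinc n)) ->
  (forall n : nat, (0 < n)%nat -> is_inverse n (sinc n) (sincinv n)) ->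
  (forall n : nat, (0 < n)%nat -> opnorm_le n (sincinv n) Cst) ->
  forall eps : R, 0 < eps ->
  exists N M : nat, (0 < N)%nat /\ (0 < M)%nat /\
    forall n : nat, (N < n)%nat ->
      exists Rb Eb : Mat,
        meq n
          (mmul n (madj (mmul n (sincinv n) (sinA n))) (mmul n (sincinv n) (sinA n)))
          (madd (madd mid Rb) Eb) /\
        rank_le n Rb (4 * M) /\
        opnorm_le n Eb eps.
Proof.
  intros Hf Ha HsA Hsc Hinv Hn.
  exact (main_from_key a sinA sinc sincinv Cst (key f a Hf Ha) HsA Hsc Hinv Hn).
Qed.
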